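(* Let $\mathcal{F}=(\mu_n,\mathcal{S}_n,K_n,\pi_n)_{n\ge1}$ be a family of irreducible, reversible discrete-time finite Markov chains and $\mathcal{F}_c$ the family of associated continuous-time chains (generators $K_n-I$). Assume $\inf_{n,x}K_n(x,x)>1/2$, $\pi_n(|\mu_n/\pi_n|^2)\to\infty$, and that there is $\epsilon_0>0$ such that $T_{n,2}(\mu_n,\epsilon_0)\to\infty$ or $T^{(c)}_{n,2}(\mu_n,\epsilon_0)\to\infty$. Then $\mathcal{F}$ has an $L^2$-cutoff if and only if $\mathcal{F}_c$ has an $L^2$-cutoff.
   Context: $T_{n,2}$ and $T^{(c)}_{n,2}$ are the $L^2$-mixing times of the $n$th chains in $\mathcal{F}$ and $\mathcal{F}_c$: $T_2(\mu,\epsilon)=\min\{t\ge0:d_2(\mu,t)\le\epsilon\}$ where $d_2(\mu,m)=\|\mu K^m/\pi-1\|_{L^2(\pi)}$ (integer $m$) in discrete time and $d_2(\mu,t)=\|\mu e^{t(K-I)}/\pi-1\|_{L^2(\pi)}$ in continuous time, $\|f\|^2_{L^2(\pi)}=\sum_y|f(y)|^2\pi(y)$. $\pi(|\mu/\pi|^2)=\sum_y\mu(y)^2/\pi(y)$. $L^2$-cutoff: there is $t_n>0$ with $d_{n,2}(\mu_n,(1+a)t_n)\to0$ and $d_{n,2}(\mu_n,(1-a)t_n)\to\infty$ for all $a\in(0,1)$ (in discrete time with $\lceil(1+a)t_n\rceil$, $\lfloor(1-a)t_n\rfloor$). *)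

(* Defs.v *)
From Stdlib Require Import Reals ZArith ClassicalEpsilon.
Open Scope R_scope.

(* States of a chain with N states are the naturals 0..N-1. *)
Fixpoint sumN (N : nat) (f : nat -> R) : R :=
  match N with O => 0 | S m => sumN m f + f m end.

Fixpoint Kpow (N : nat) (K : nat -> nat -> R) (m : nat) : nat -> nat -> R :=
  match m with
  | O => fun x y => if Nat.eqb x y then 1 else 0
  | S m' => fun x y => sumN N (fun z => Kpow N K m' x z * K z y)
  end.

Definition is_prob (N : nat) (p : nat -> R) : Prop :=
  (forall x, (x < N)%nat -> 0 <= p x) /\ sumN N p = 1.

Definition is_markov_kernel (N : nat) (K : nat -> nat -> R) : Prop :=
  forall x, (x < N)%nat -> is_prob N (K x).

Definition irreducible (N : nat) (K : nat -> nat -> R) : Prop :=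
  forall x y, (x < N)%nat -> (y < N)%nat -> exists m, 0 < Kpow N K m x y.

Definition reversible (N : nat) (K : nat -> nat -> R) (pi : nat -> R) : Prop :=
  forall x y, (x < N)%nat -> (y < N)%nat -> pi x * K x y = pi y * K y x.

Definition series_val (a : nat -> R) : R :=
  epsilon (inhabits 0) (fun l => Un_cv (fun m => sum_f_R0 a m) l).

(* continuous-time kernel e^{t(K-I)}(x,y) = e^{-t} sum_k t^k/k! K^k(x,y) *)
Definition Ht (N : nat) (K : nat -> nat -> R) (t : R) (x y : nat) : R :=
  exp (- t) * series_val (fun k => t ^ k / INR (fact k) * Kpow N K k x y).

Definition L2dist (N : nat) (pi nu : nat -> R) : R :=
  sqrt (sumN N (fun y => (nu y / pi y - 1) ^ 2 * pi y)).

Definition d2 (N : nat) (K : nat -> nat -> R) (pi mu : nat -> R) (m : nat) : R :=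
  L2dist N pi (fun y => sumN N (fun x => mu x * Kpow N K m x y)).

Definition d2c (N : nat) (K : nat -> nat -> R) (pi mu : nat -> R) (t : R) : R :=
  L2dist N pi (fun y => sumN N (fun x => mu x * Ht N K t x y)).

Definition T2 (N : nat) (K : nat -> nat -> R) (pi mu : nat -> R) (eps : R) : nat :=
  epsilon (inhabits 0%nat) (fun m => d2 N K pi mu m <= eps /\
     forall k, d2 N K pi mu k <= eps -> (m <= k)%nat).

Definition T2c (N : nat) (K : nat -> nat -> R) (pi mu : nat -> R) (eps : R) : R :=
  epsilon (inhabits 0) (fun t => 0 <= t /\ d2c N K pi mu t <= eps /\
     forall s, 0 <= s -> d2c N K pi mu s <= eps -> t <= s).

Definition nfloor (x : R) : nat := Z.to_nat (Int_part x).
Definition nceil (x : R) : nat := Z.to_nat (- Int_part (- x)).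

Definition L2_cutoff (N : nat -> nat) (K : nat -> nat -> nat -> R)
  (pi mu : nat -> nat -> R) : Prop :=
  exists tn : nat -> R, (forall n, 0 < tn n) /\
    forall a, 0 < a < 1 ->
      Un_cv (fun n => d2 (N n) (K n) (pi n) (mu n) (nceil ((1 + a) * tn n))) 0 /\
      cv_infty (fun n => d2 (N n) (K n) (pi n) (mu n) (nfloor ((1 - a) * tn n))).

Definition L2_cutoff_c (N : nat -> nat) (K : nat -> nat -> nat -> R)
  (pi mu : nat -> nat -> R) : Prop :=
  exists tn : nat -> R, (forall n, 0 < tn n) /\
    forall a, 0 < a < 1 ->
      Un_cv (fun n => d2c (N n) (K n) (pi n) (mu n) ((1 + a) * tn n)) 0 /\
      cv_infty (fun n => d2c (N n) (K n) (pi n) (mu n) ((1 - a) * tn n)).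

(* Main.v *)
Require Import Defs.
From Stdlib Require Import Reals ZArith ClassicalEpsilon Lra Lia Classical.
Open Scope R_scope.

From Stdlib Require Import Reals ZArith ClassicalEpsilon Lra Lia Classical.
Open Scope R_scope.

Lemma sumN_ext N f g : (forall i, (i < N)%nat -> f i = g i) -> sumN N f = sumN N g.
Proof. induction N; simpl; intros H; auto. rewrite IHN by (intros; apply H; lia). rewrite H by lia. auto. Qed.

Lemma sumN_plus N f g : sumN N (fun i => f i + g i) = sumN N f + sumN N g.
Proof. induction N; simpl; [lra|rewrite IHN; lra]. Qed.

Lemma sumN_minus N f g : sumN N (fun i => f i - g i) = sumN N f - sumN N g.
Proof. induction N; simpl; [lra|rewrite IHN; lra]. Qed.

Lemma sumN_scal N c f : c * sumN N f = sumN N (fun i => c * f i).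
Proof. induction N; simpl; [lra|rewrite <- IHN; lra]. Qed.

Lemma sumN_scal_r N c f : sumN N f * c = sumN N (fun i => f i * c).
Proof. induction N; simpl; [lra|rewrite <- IHN; lra]. Qed.

Lemma sumN_0 N : sumN N (fun _ => 0) = 0.
Proof. induction N; simpl; [lra|rewrite IHN; lra]. Qed.

Lemma sumN_le N f g : (forall i, (i < N)%nat -> f i <= g i) -> sumN N f <= sumN N g.
Proof. induction N; simpl; intros H; [lra|]. assert (f N <= g N) by (apply H; lia).
  assert (sumN N f <= sumN N g) by (apply IHN; intros; apply H; lia). lra. Qed.

Lemma sumN_nonneg N f : (forall i, (i < N)%nat -> 0 <= f i) -> 0 <= sumN N f.
Proof. intros H. rewrite <- (sumN_0 N). apply sumN_le. auto. Qed.

Lemma sumN_lt N f g : (forall i, (i < N)%nat -> f i <= g i) ->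
  (exists i, (i < N)%nat /\ f i < g i) -> sumN N f < sumN N g.
Proof. induction N; simpl; intros H [i [Hi Hlt]]; [lia|].
  destruct (Nat.eq_dec i N) as [->|Hne].
  - assert (sumN N f <= sumN N g) by (apply sumN_le; intros; apply H; lia). lra.
  - assert (sumN N f < sumN N g) by (apply IHN; [intros; apply H; lia| exists i; split; [lia|auto]]).
    assert (f N <= g N) by (apply H; lia). lra. Qed.

Lemma sumN_pos_exists N f : 0 < sumN N f -> exists i, (i < N)%nat /\ 0 < f i.
Proof. intros H. apply NNPP. intros Hn.
  assert (sumN N f <= sumN N (fun _ => 0)).
  { apply sumN_le. intros i Hi. apply Rnot_lt_le. intros Hl. apply Hn. exists i; auto. }
  rewrite sumN_0 in H0. lra. Qed.

Lemma sumN_exchange N M (f : nat -> nat -> R) :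
  sumN N (fun i => sumN M (fun j => f i j)) = sumN M (fun j => sumN N (fun i => f i j)).
Proof. induction N; simpl.
  - rewrite sumN_0. auto.
  - rewrite IHN, <- sumN_plus. auto. Qed.

Lemma sumN_delta N x0 (a : nat -> R) : (x0 < N)%nat ->
  sumN N (fun y => if Nat.eqb x0 y then a y else 0) = a x0.
Proof. induction N; intros H; simpl; [lia|].
  destruct (Nat.eq_dec x0 N) as [->|Hne].
  - rewrite Nat.eqb_refl. rewrite (sumN_ext N _ (fun _ => 0)).
    + rewrite sumN_0; lra.
    + intros i Hi. destruct (Nat.eqb_spec N i); [lia|auto].
  - rewrite IHN by lia. destruct (Nat.eqb_spec x0 N); [lia|lra]. Qed.

Lemma sumN_delta' N x0 (a : nat -> R) : (x0 < N)%nat ->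
  sumN N (fun y => if Nat.eqb y x0 then a y else 0) = a x0.
Proof. intros H. rewrite <- (sumN_delta N x0 a H). apply sumN_ext. intros i _.
  rewrite Nat.eqb_sym. auto. Qed.

Lemma sumN_abs N f : Rabs (sumN N f) <= sumN N (fun i => Rabs (f i)).
Proof. induction N; simpl.
  - rewrite Rabs_R0; lra.
  - eapply Rle_trans; [apply Rabs_triang|]. lra. Qed.

Lemma sumN_zero_nonneg N f : (forall i, (i < N)%nat -> 0 <= f i) -> sumN N f = 0 ->
  forall i, (i < N)%nat -> f i = 0.
Proof. induction N; simpl; intros H Hs i Hi; [lia|].
  assert (0 <= sumN N f) by (apply sumN_nonneg; intros; apply H; lia).
  assert (0 <= f N) by (apply H; lia).
  destruct (Nat.eq_dec i N) as [->|Hne]; [lra|].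
  apply IHN; [intros; apply H; lia|lra|lia]. Qed.

Lemma argmax N (h : nat -> R) : (1 <= N)%nat -> exists x0, (x0 < N)%nat /\ forall x, (x < N)%nat -> h x <= h x0.
Proof. induction N; intros HN; [lia|].
  destruct N.
  - exists 0%nat. split; [lia|]. intros x Hx. assert (x = 0%nat) by lia. subst; lra.
  - destruct IHN as [x0 [Hx0 Hm]]; [lia|].
    destruct (Rle_dec (h x0) (h (S N))).
    + exists (S N). split; [lia|]. intros x Hx. destruct (Nat.eq_dec x (S N)); [subst; lra|].
      specialize (Hm x ltac:(lia)). lra.
    + exists x0. split; [lia|]. intros x Hx. destruct (Nat.eq_dec x (S N)); [subst; lra|].
      apply Hm; lia. Qed.

Lemma exp_ge1 x : 1 + x <= exp x.
Proof. destruct (Req_dec x 0) as [->|H]. rewrite exp_0; lra. left; apply exp_ineq1; auto. Qed.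

Definition spec_concl (N : nat) (B : nat -> nat -> R) (z : nat -> R) : Prop :=
 exists (lam : nat -> R) (f g : nat -> nat -> R),
  (forall i y, (i < N)%nat -> (y < N)%nat ->
     sumN N (fun x => B y x * f i x) = lam i * f i y /\
     sumN N (fun x => B y x * g i x) = lam i * g i y) /\
  (forall k x y, (x < N)%nat -> (y < N)%nat ->
     Kpow N B k x y = sumN N (fun i => (f i x * f i y + g i x * g i y) * lam i ^ k) /\
     0 = sumN N (fun i => (f i x * g i y - g i x * f i y) * lam i ^ k)) /\
  (forall d : nat -> R,
     (forall y, (y < N)%nat -> sumN N (fun i => (sumN N (fun x => z x * f i x) * g i y
            - sumN N (fun x => z x * g i x) * f i y) * d i) = 0) ->
     sumN N (fun y => (sumN N (fun i => (sumN N (fun x => z x * f i x) * f i y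
            + sumN N (fun x => z x * g i x) * g i y) * d i)) ^ 2)
     = sumN N (fun i => ((sumN N (fun x => z x * f i x)) ^ 2
            + (sumN N (fun x => z x * g i x)) ^ 2) * d i ^ 2)).

From Stdlib Require Import Reals ZArith ClassicalEpsilon Lra Lia Classical.
Open Scope R_scope.

Section Chain.
Variable N : nat.
Variable K : nat -> nat -> R.
Variable pi : nat -> R.
Hypothesis HK : is_markov_kernel N K.
Hypothesis Hpipos : forall x, (x < N)%nat -> 0 < pi x.
Hypothesis Hrev : reversible N K pi.

Definition sq x := sqrt (pi x).
Definition Bs x y := sq x * K x y / sq y.

Lemma sq_pos x : (x < N)%nat -> 0 < sq x.
Proof. intros. apply sqrt_lt_R0. auto. Qed.

Lemma sq_sq x : (x < N)%nat -> sq x * sq x = pi x.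
Proof. intros. apply sqrt_sqrt. left; auto. Qed.

Lemma Kpow_Bs k x y : (x < N)%nat -> (y < N)%nat ->
  Kpow N Bs k x y = sq x * Kpow N K k x y / sq y.
Proof. revert y. induction k; intros y Hx Hy; simpl.
  - destruct (Nat.eqb_spec x y).
    + subst. field. apply Rgt_not_eq, sq_pos; auto.
    + unfold Rdiv. ring.
  - rewrite (sumN_ext N _ (fun w => (sq x / sq y) * (Kpow N K k x w * K w y))).
    + rewrite <- sumN_scal. field. apply Rgt_not_eq, sq_pos; auto.
    + intros w Hw. rewrite IHk by auto. unfold Bs. field.
      split; apply Rgt_not_eq, sq_pos; auto.
Qed.

Lemma Bs_sym x y : (x < N)%nat -> (y < N)%nat -> Bs x y = Bs y x.
Proof. intros Hx Hy. unfold Bs.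
  assert (Hr := Hrev x y Hx Hy). rewrite <- (sq_sq x Hx), <- (sq_sq y Hy) in Hr.
  assert (0 < sq x) by (apply sq_pos; auto). assert (0 < sq y) by (apply sq_pos; auto).
  apply (Rmult_eq_reg_r (sq x * sq y)); [|nra].
  assert (E1: sq x * K x y / sq y * (sq x * sq y) = (sq x * sq x) * K x y) by (field; lra).
  assert (E2: sq y * K y x / sq x * (sq x * sq y) = (sq y * sq y) * K y x) by (field; lra).
  rewrite E1, E2. lra. Qed.

Lemma Kpow_S_left k x y : (x < N)%nat -> (y < N)%nat ->
  Kpow N K (S k) x y = sumN N (fun w => K x w * Kpow N K k w y).
Proof. revert x y. induction k; intros x y Hx Hy.
  - simpl. transitivity (K x y).
    + rewrite (sumN_ext N _ (fun w => if Nat.eqb x w then K w y else 0)); [apply (sumN_delta N x (fun w => K w y)); auto|].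
      intros w Hw. destruct (Nat.eqb_spec x w); [subst; ring|ring].
    + symmetry. rewrite (sumN_ext N _ (fun w => if Nat.eqb w y then K x w else 0)); [apply (sumN_delta' N y (fun w => K x w)); auto|].
      intros w Hw. destruct (Nat.eqb_spec w y); [subst; ring|ring].
  - change (Kpow N K (S (S k)) x y) with (sumN N (fun w => Kpow N K (S k) x w * K w y)).
    rewrite (sumN_ext N _ (fun w => sumN N (fun v => K x v * Kpow N K k v w * K w y))).
    + rewrite sumN_exchange. apply sumN_ext. intros v Hv. simpl.
      rewrite sumN_scal. apply sumN_ext. intros; ring.
    + intros w Hw. rewrite IHk by auto. rewrite sumN_scal_r. apply sumN_ext; intros; ring.
Qed.

Lemma K_nonneg x y : (x < N)%nat -> (y < N)%nat -> 0 <= K x y.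
Proof. intros Hx Hy. destruct (HK x Hx) as [H _]. auto. Qed.

Lemma K_rowsum x : (x < N)%nat -> sumN N (K x) = 1.
Proof. intros Hx. destruct (HK x Hx) as [_ H]. auto. Qed.

Lemma Kpow_nonneg k x y : (x < N)%nat -> (y < N)%nat -> 0 <= Kpow N K k x y.
Proof. revert y. induction k; intros y Hx Hy; simpl.
  - destruct (Nat.eqb x y); lra.
  - apply sumN_nonneg. intros w Hw. apply Rmult_le_pos; [apply IHk|apply K_nonneg]; auto. Qed.

Lemma Kpow_rowsum k x : (x < N)%nat -> sumN N (fun y => Kpow N K k x y) = 1.
Proof. revert x. induction k; intros x Hx; simpl.
  - apply (sumN_delta N x (fun _ => 1)); auto.
  - rewrite sumN_exchange.
    rewrite (sumN_ext N _ (fun w => Kpow N K k x w * 1)).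
    + transitivity (sumN N (fun w => Kpow N K k x w)); [apply sumN_ext; intros; ring| apply IHk; auto].
    + intros w Hw. rewrite <- (K_rowsum w Hw), sumN_scal. auto.
Qed.

Lemma stationary k y : (y < N)%nat -> sumN N (fun x => pi x * Kpow N K k x y) = pi y.
Proof. revert y. induction k; intros y Hy; simpl.
  - rewrite (sumN_ext N _ (fun x => if Nat.eqb x y then pi x else 0)).
    + apply sumN_delta'; auto.
    + intros x Hx. destruct (Nat.eqb_spec x y); destruct (Nat.eqb_spec x y); try lia; ring.
  - rewrite (sumN_ext N _ (fun x => sumN N (fun w => pi x * Kpow N K k x w * K w y))).
    + rewrite sumN_exchange.
      rewrite (sumN_ext N _ (fun w => pi y * K y w)).
      * rewrite <- sumN_scal, K_rowsum by auto. ring.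
      * intros w Hw. rewrite <- sumN_scal_r, IHk by auto. apply Hrev; auto.
    + intros x Hx. rewrite sumN_scal. apply sumN_ext. intros; ring.
Qed.

Lemma Kpow_eigen (h : nat -> R) (l : R) :
  (forall x, (x < N)%nat -> sumN N (fun y => K x y * h y) = l * h x) ->
  forall k x, (x < N)%nat -> sumN N (fun y => Kpow N K k x y * h y) = l ^ k * h x.
Proof. intros He. induction k; intros x Hx.
  - simpl. rewrite (sumN_ext N _ (fun y => if Nat.eqb x y then h y else 0)).
    + rewrite sumN_delta; auto. ring.
    + intros y Hy. destruct (Nat.eqb x y); ring.
  - rewrite (sumN_ext N _ (fun y => sumN N (fun w => K x w * Kpow N K k w y * h y))).
    + rewrite sumN_exchange.
      rewrite (sumN_ext N _ (fun w => K x w * (l ^ k * h w))).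
      * rewrite (sumN_ext N _ (fun w => l ^ k * (K x w * h w))) by (intros; ring).
        rewrite <- sumN_scal, He by auto. simpl. ring.
      * intros w Hw. rewrite <- IHk by auto. rewrite sumN_scal. apply sumN_ext; intros; ring.
    + intros y Hy. rewrite Kpow_S_left by auto. rewrite sumN_scal_r. auto.
Qed.

Lemma eigen_bound (c l : R) (h : nat -> R) :
  (forall x, (x < N)%nat -> c <= K x x) ->
  (forall x, (x < N)%nat -> sumN N (fun y => K x y * h y) = l * h x) ->
  (exists x, (x < N)%nat /\ h x <> 0) -> Rabs (l - c) <= 1 - c.
Proof. intros Hc He [x1 [Hx1 Hh1]].
  destruct (argmax N (fun x => Rabs (h x))) as [x0 [Hx0 Hm]]; [lia|].
  set (M := Rabs (h x0)).
  assert (HM : 0 < M). { specialize (Hm x1 Hx1). apply Rabs_pos_lt in Hh1. unfold M; lra. }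
  set (K' := fun y => K x0 y - (if Nat.eqb x0 y then c else 0)).
  assert (HK' : forall y, (y < N)%nat -> 0 <= K' y).
  { intros y Hy. unfold K'. destruct (Nat.eqb_spec x0 y).
    - subst. specialize (Hc y Hy). lra.
    - rewrite Rminus_0_r. apply K_nonneg; auto. }
  assert (E : sumN N (fun y => K' y * h y) = (l - c) * h x0).
  { unfold K'. rewrite (sumN_ext N _ (fun y => K x0 y * h y - (if Nat.eqb x0 y then c * h y else 0))).
    - rewrite sumN_minus, He by auto. rewrite sumN_delta by auto. ring.
    - intros y Hy. destruct (Nat.eqb x0 y); ring. }
  assert (E2 : Rabs ((l - c) * h x0) <= (1 - c) * M).
  { rewrite <- E. eapply Rle_trans; [apply sumN_abs|].
    apply Rle_trans with (sumN N (fun y => K' y * M)).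
    - apply sumN_le. intros y Hy. rewrite Rabs_mult, (Rabs_right (K' y)) by (apply Rle_ge, HK'; auto).
      apply Rmult_le_compat_l; [apply HK'; auto| apply Hm; auto].
    - rewrite <- sumN_scal_r. unfold K'. rewrite sumN_minus, K_rowsum by auto.
      rewrite (sumN_delta N x0 (fun _ => c)) by auto. lra. }
  rewrite Rabs_mult in E2. fold M in E2.
  apply (Rmult_le_reg_r M); [exact HM|]. rewrite (Rmult_comm (Rabs _)). lra. Qed.

Hypothesis Hirr : irreducible N K.

Lemma harmonic_const (h : nat -> R) :
  (forall x, (x < N)%nat -> sumN N (fun y => K x y * h y) = h x) ->
  (1 <= N)%nat -> exists C, forall x, (x < N)%nat -> h x = C.
Proof. intros He HN.
  destruct (argmax N h HN) as [x0 [Hx0 Hm]].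
  exists (h x0). intros y Hy.
  destruct (Hirr x0 y Hx0 Hy) as [m Hpos].
  assert (He' : forall x, (x < N)%nat -> sumN N (fun y => K x y * h y) = 1 * h x).
  { intros; rewrite Rmult_1_l; auto. }
  assert (Hk := Kpow_eigen h 1 He' m x0 Hx0). rewrite pow1, Rmult_1_l in Hk.
  assert (Hs : sumN N (fun w => Kpow N K m x0 w * (h x0 - h w)) = 0).
  { rewrite (sumN_ext N _ (fun w => h x0 * Kpow N K m x0 w - Kpow N K m x0 w * h w)) by (intros; ring).
    rewrite sumN_minus, <- sumN_scal, Kpow_rowsum, Hk by auto. ring. }
  assert (Hnn : forall w, (w < N)%nat -> 0 <= Kpow N K m x0 w * (h x0 - h w)).
  { intros w Hw. apply Rmult_le_pos; [apply Kpow_nonneg; auto | specialize (Hm w Hw); lra]. }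
  assert (Hz := sumN_zero_nonneg N _ Hnn Hs y Hy).
  simpl in Hz. apply Rmult_integral in Hz. destruct Hz; lra. Qed.

End Chain.

From Stdlib Require Import Reals ZArith ClassicalEpsilon Lra Lia Classical.
Open Scope R_scope.

Definition Es (N : nat) (w r : nat -> R) (t : R) := sumN N (fun i => w i * exp (- t * r i)).
Definition Ss (N : nat) (w r : nat -> R) (t : R) := sumN N (fun i => w i * r i * exp (- t * r i)).

Lemma exp_le x y : x <= y -> exp x <= exp y.
Proof. intros [H|H]; [left; apply exp_increasing; auto|subst; lra]. Qed.

Lemma exp_tangent a b : exp b * (1 + (a - b)) <= exp a.
Proof. replace a with (b + (a - b)) at 2 by ring. rewrite exp_plus.
  apply Rmult_le_compat_l; [left; apply exp_pos|apply exp_ge1]. Qed.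

Lemma cont_term a b : continuity (fun t => a * exp (- t * b)).
Proof. apply derivable_continuous. intro x. reg. Qed.

Lemma Es_cont N w r : continuity (fun t => Es N w r t).
Proof. induction N; unfold Es; simpl.
  - apply continuity_const. intros x y; auto.
  - apply (continuity_plus (fun t => Es N w r t) (fun t => w N * exp (- t * r N))); auto.
    apply cont_term. Qed.

Section Single.
Variable N : nat.
Variables w r : nat -> R.
Hypothesis Hw : forall i, (i < N)%nat -> 0 <= w i.
Hypothesis Hr : forall i, (i < N)%nat -> 0 < r i.

Lemma Es_nonneg t : 0 <= Es N w r t.
Proof. apply sumN_nonneg. intros i Hi. apply Rmult_le_pos; [auto|left; apply exp_pos]. Qed.

Lemma Ss_nonneg t : 0 <= Ss N w r t.
Proof. apply sumN_nonneg. intros i Hi. apply Rmult_le_pos; [apply Rmult_le_pos; [auto|left; auto]|left; apply exp_pos]. Qed.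

Lemma Es_mono t1 t2 : t1 <= t2 -> Es N w r t2 <= Es N w r t1.
Proof. intros H. apply sumN_le. intros i Hi. apply Rmult_le_compat_l; [auto|].
  apply exp_le. specialize (Hr i Hi). nra. Qed.

Lemma Es_0 : Es N w r 0 = sumN N w.
Proof. unfold Es. apply sumN_ext. intros. replace (- 0 * r i) with 0 by ring. rewrite exp_0. ring. Qed.

Lemma Es_strict t1 t2 : 0 < sumN N w -> t1 < t2 -> Es N w r t2 < Es N w r t1.
Proof. intros Hs H. apply sumN_lt.
  - intros i Hi. apply Rmult_le_compat_l; [auto|]. apply exp_le. specialize (Hr i Hi). nra.
  - destruct (sumN_pos_exists N w Hs) as [i [Hi Hwi]]. exists i. split; auto.
    apply Rmult_lt_compat_l; auto. apply exp_increasing. specialize (Hr i Hi). nra. Qed.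

End Single.

Lemma Es_small N w r eps : (forall i, (i < N)%nat -> 0 <= w i) -> (forall i, (i < N)%nat -> 0 < r i) ->
  0 < eps -> exists B, forall t, B <= t -> Es N w r t < eps.
Proof. revert eps. induction N as [|N' IH]; intros eps Hw Hr Heps.
  - exists 0. intros t _. unfold Es. simpl. auto.
  - destruct (IH (eps / 2)) as [B1 HB1]; [intros; apply Hw; lia|intros; apply Hr; lia|lra|].
    assert (HwN := Hw N' ltac:(lia)). assert (HrN := Hr N' ltac:(lia)).
    exists (Rmax B1 ((2 * w N' / eps) / r N')). intros t Ht.
    unfold Es; simpl. fold (Es N' w r t).
    assert (H1 : Es N' w r t < eps / 2) by (apply HB1; eapply Rle_trans; [apply Rmax_l|eauto]).
    assert (Ht2 : (2 * w N' / eps) / r N' <= t) by (eapply Rle_trans; [apply Rmax_r|eauto]).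
    assert (H2 : w N' * exp (- t * r N') < eps / 2).
    { assert (Htr : 2 * w N' / eps <= t * r N').
      { apply (Rmult_le_compat_r (r N')) in Ht2; [|lra]. unfold Rdiv in Ht2 at 1.
        rewrite Rmult_assoc, Rinv_l, Rmult_1_r in Ht2 by lra. auto. }
      assert (He := exp_ge1 (t * r N')).
      replace (- t * r N') with (- (t * r N')) by ring. rewrite exp_Ropp.
      assert (0 < exp (t * r N')) by apply exp_pos.
      apply (Rmult_lt_reg_r (exp (t * r N'))); auto.
      rewrite Rmult_assoc, Rinv_l, Rmult_1_r by lra.
      assert (2 * w N' / eps * eps = 2 * w N') by (field; lra).
      assert (w N' < eps / 2 * (1 + t * r N')).
      { apply (Rmult_lt_reg_l (2 / eps)). apply Rdiv_lt_0_compat; lra.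
        replace (2 / eps * (eps / 2 * (1 + t * r N'))) with (1 + t * r N') by (field; lra).
        replace (2 / eps * w N') with (2 * w N' / eps) by (field; lra). lra. }
      nra. }
    lra.
Qed.

Section Single2.
Variable N : nat.
Variables w r : nat -> R.
Hypothesis Hw : forall i, (i < N)%nat -> 0 <= w i.
Hypothesis Hr : forall i, (i < N)%nat -> 0 < r i.

Lemma time_exists eps : 0 < eps < sumN N w -> exists T, 0 < T /\ Es N w r T = eps.
Proof. intros [He1 He2].
  destruct (Es_small N w r eps Hw Hr He1) as [B HB].
  set (g := fun t => Es N w r t - eps).
  assert (Hg : continuity g).
  { apply (continuity_minus (fun t => Es N w r t) (fun _ => eps)); [apply Es_cont|].
    apply continuity_const. intros x y; auto. }
  destruct (IVT_cor g 0 (Rmax B 1) Hg) as [z [[Hz1 Hz2] Hz]].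
  - assert (0 <= 1) by lra. eapply Rle_trans; [|apply Rmax_r]. lra.
  - unfold g. rewrite Es_0 by auto. assert (Es N w r (Rmax B 1) < eps) by (apply HB; apply Rmax_l).
    nra.
  - exists z. unfold g in Hz. split; [|lra].
    destruct Hz1 as [|E]; auto. subst z. rewrite Es_0 in Hz by auto. lra. Qed.

Lemma jensen T x : 0 < Es N w r T ->
  Es N w r T * exp (- (x - T) * (Ss N w r T / Es N w r T)) <= Es N w r x.
Proof. intros HE. set (R0 := Ss N w r T / Es N w r T).
  apply Rle_trans with (sumN N (fun i => w i * exp (- T * r i) * (exp (- (x - T) * R0) * (1 + (- (x - T) * r i - - (x - T) * R0))))).
  - right. rewrite (sumN_ext N _ (fun i => exp (- (x - T) * R0) * (w i * exp (- T * r i)) - exp (- (x - T) * R0) * (x - T) * (w i * r i * exp (- T * r i)) + exp (- (x - T) * R0) * (x - T) * R0 * (w i * exp (- T * r i)))) by (intros; ring).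
    rewrite !sumN_plus, !sumN_minus, <- !sumN_scal. fold (Es N w r T). fold (Ss N w r T).
    unfold R0. field. lra.
  - apply sumN_le. intros i Hi. 
    replace (w i * exp (- x * r i)) with (w i * exp (- T * r i) * exp (- (x - T) * r i)).
    + apply Rmult_le_compat_l; [apply Rmult_le_pos; [auto|left; apply exp_pos]|]. apply exp_tangent.
    + rewrite Rmult_assoc, <- exp_plus. f_equal. f_equal. ring. Qed.

Definition ind (b : R) (x : R) : R := if Rle_dec x b then 1 else 0.

Lemma markov_conc T Kc : 0 < T -> 0 < Kc ->
  Es N w r T - T / Kc * Ss N w r T <= sumN N (fun i => w i * exp (- T * r i) * ind (Kc / T) (r i)).
Proof. intros HT HK. unfold Es, Ss. rewrite sumN_scal, <- sumN_minus. apply sumN_le. intros i Hi.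
  unfold ind. assert (H0 : 0 <= w i * exp (- T * r i)) by (apply Rmult_le_pos; [auto|left; apply exp_pos]).
  destruct (Rle_dec (r i) (Kc / T)) as [Hle|Hle].
  - assert (0 <= T / Kc * (w i * r i * exp (- T * r i))).
    { apply Rmult_le_pos; [left; apply Rdiv_lt_0_compat; auto|]. 
      apply Rmult_le_pos; [apply Rmult_le_pos; [auto|left; auto]|left; apply exp_pos]. }
    lra.
  - apply Rnot_le_lt in Hle. 
    assert (1 < T / Kc * r i).
    { apply (Rmult_lt_compat_l (T / Kc)) in Hle; [|apply Rdiv_lt_0_compat; auto].
      replace (T / Kc * (Kc / T)) with 1 in Hle by (field; lra). auto. }
    replace (T / Kc * (w i * r i * exp (- T * r i))) with ((T / Kc * r i) * (w i * exp (- T * r i))) by ring.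
    nra. Qed.

End Single2.

Lemma cmp_upper N w r r' kappa x : (forall i, (i < N)%nat -> 0 <= w i) ->
  (forall i, (i < N)%nat -> r' i <= kappa * r i) -> 0 < kappa -> 0 <= x ->
  Es N w r x <= Es N w r' (x / kappa).
Proof. intros Hw Hk Hkp Hx. apply sumN_le. intros i Hi. apply Rmult_le_compat_l; auto.
  apply exp_le. specialize (Hk i Hi).
  assert (x / kappa * r' i <= x / kappa * (kappa * r i)).
  { apply Rmult_le_compat_l; auto. unfold Rdiv. apply Rmult_le_pos; [auto|left; apply Rinv_0_lt_compat; auto]. }
  replace (x / kappa * (kappa * r i)) with (x * r i) in H by (field; lra). lra. Qed.

Lemma cmp_lower N w r r' C T rho Kc : (forall i, (i < N)%nat -> 0 <= w i) ->
  (forall i, (i < N)%nat -> 0 < r' i) ->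
  (forall i, (i < N)%nat -> r i <= r' i + C * r' i ^ 2) -> 0 <= C -> 0 < T -> 1 <= rho -> 0 < Kc ->
  exp (- ((rho - 1) * Kc) - rho * C * Kc ^ 2 / T) * sumN N (fun i => w i * exp (- T * r' i) * ind (Kc / T) (r' i))
  <= Es N w r (rho * T).
Proof. intros Hw Hr' HC HC0 HT Hrho HK. rewrite sumN_scal. apply sumN_le. intros i Hi.
  unfold ind. destruct (Rle_dec (r' i) (Kc / T)) as [H|H].
  - rewrite Rmult_1_r. 
    replace (exp (- ((rho - 1) * Kc) - rho * C * Kc ^ 2 / T) * (w i * exp (- T * r' i))) with
      (w i * exp (- ((rho - 1) * Kc) - rho * C * Kc ^ 2 / T + - T * r' i)) by (rewrite exp_plus; ring).
    apply Rmult_le_compat_l; [auto|]. apply exp_le.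
    specialize (HC i Hi). specialize (Hr' i Hi).
    assert (Hr1 : T * r' i <= Kc).
    { apply (Rmult_le_compat_l T) in H; [|lra]. replace (T * (Kc / T)) with Kc in H by (field; lra). auto. }
    assert (Hr2 : T * r' i ^ 2 <= Kc ^ 2 / T).
    { assert (0 <= T * r' i) by nra.
      assert ((T * r' i) ^ 2 <= Kc ^ 2) by (apply pow_incr; auto).
      apply (Rmult_le_reg_l T); auto. replace (T * (Kc ^ 2 / T)) with (Kc ^ 2) by (field; lra).
      replace (T * (T * r' i ^ 2)) with ((T * r' i) ^ 2) by ring. auto. }
    assert (rho * T * r i <= rho * T * r' i + rho * C * (T * r' i ^ 2)).
    { replace (rho * T * r' i + rho * C * (T * r' i ^ 2)) with (rho * T * (r' i + C * r' i ^ 2)) by ring.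
      apply Rmult_le_compat_l; nra. }
    assert (rho * C * (T * r' i ^ 2) <= rho * C * (Kc ^ 2 / T)).
    { apply Rmult_le_compat_l; nra. }
    assert ((rho - 1) * (T * r' i) <= (rho - 1) * Kc) by (apply Rmult_le_compat_l; lra).
    unfold Rdiv in *. nra.
  - rewrite !Rmult_0_r. apply Rmult_le_pos; [auto|left; apply exp_pos]. Qed.

From Stdlib Require Import Reals ZArith ClassicalEpsilon Lra Lia Classical.
Open Scope R_scope.

Definition cutoffE (N : nat -> nat) (w r : nat -> nat -> R) : Prop :=
  exists tn : nat -> R, (forall n, 0 < tn n) /\ forall a, 0 < a < 1 ->
    Un_cv (fun n => Es (N n) (w n) (r n) ((1 + a) * tn n)) 0 /\
    cv_infty (fun n => Es (N n) (w n) (r n) ((1 - a) * tn n)).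

Definition Tm (N : nat -> nat) (w r : nat -> nat -> R) (eps : R) (n : nat) : R :=
  epsilon (inhabits 1) (fun T => 0 < T /\ Es (N n) (w n) (r n) T = eps).

Section Family.
Variable N : nat -> nat.
Variables w r : nat -> nat -> R.
Hypothesis Hw : forall n i, (i < N n)%nat -> 0 <= w n i.
Hypothesis Hr : forall n i, (i < N n)%nat -> 0 < r n i.
Hypothesis Hsum : cv_infty (fun n => sumN (N n) (w n)).

Lemma Tm_spec eps n : 0 < eps < sumN (N n) (w n) ->
  0 < Tm N w r eps n /\ Es (N n) (w n) (r n) (Tm N w r eps n) = eps.
Proof. intros H. unfold Tm. apply epsilon_spec.
  apply time_exists; auto. Qed.

Lemma eventually_big eps : exists n0, forall n, (n0 <= n)%nat -> eps < sumN (N n) (w n).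
Proof. destruct (Hsum eps) as [n0 H]. exists n0. intros n Hn. apply H. lia. Qed.

Lemma suff eps1 : 0 < eps1 ->
  (forall eps, 0 < eps <= eps1 ->
     cv_infty (fun n => Tm N w r eps n * Ss (N n) (w n) (r n) (Tm N w r eps n) / eps)) ->
  cutoffE N w r.
Proof. intros He1 Hq.
  set (T1 := Tm N w r eps1).
  exists (fun n => match Rlt_dec 0 (T1 n) with left _ => T1 n | right _ => 1 end).
  split. { intros n. destruct (Rlt_dec 0 (T1 n)); lra. }
  intros a Ha.
  destruct (eventually_big eps1) as [n0 Hn0].
  assert (Ht1 : forall n, (n0 <= n)%nat -> (match Rlt_dec 0 (T1 n) with left _ => T1 n | right _ => 1 end) = T1 n
     /\ 0 < T1 n /\ Es (N n) (w n) (r n) (T1 n) = eps1).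
  { intros n Hn. destruct (Tm_spec eps1 n) as [A B]; [split; auto|].
    destruct (Rlt_dec 0 (T1 n)); [|unfold T1 in *; lra]. auto. }
  split.
  - intros eta Heta.
    set (eps := Rmin (eta / 2) (eps1 / 2)).
    assert (Heps : 0 < eps) by (unfold eps; apply Rmin_pos; lra).
    assert (Heps1 : eps < eps1) by (unfold eps; assert (Rmin (eta/2) (eps1/2) <= eps1/2) by apply Rmin_r; lra).
    assert (Heps2 : eps < eta) by (unfold eps; assert (Rmin (eta/2) (eps1/2) <= eta/2) by apply Rmin_l; lra).
    set (L := eps1 / eps * (1 + a) / a + 1).
    destruct (Hq eps ltac:(lra) L) as [n1 Hn1].
    exists (Nat.max n0 n1). intros n Hn. unfold R_dist. rewrite Rminus_0_r.
    destruct (Ht1 n ltac:(lia)) as [-> [HT1p HT1e]].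
    destruct (Tm_spec eps n) as [HTp HTe]; [split; auto; apply Rlt_trans with eps1; auto; apply Hn0; lia|].
    set (T := Tm N w r eps n) in *.
    set (S := Ss (N n) (w n) (r n) T).
    assert (HS : 0 <= S) by (apply Ss_nonneg; auto).
    assert (HQ : L < T * S / eps) by (apply Hn1; lia).
    assert (HTle : T <= (1 + a) * T1 n).
    { apply Rnot_lt_le. intros Hlt.
      assert (Hj := jensen (N n) (w n) (r n) (Hw n) T (T1 n) ltac:(lra)).
      rewrite HTe, HT1e in Hj. fold S in Hj.
      set (X := - (T1 n - T) * (S / eps)) in Hj.
      assert (HX : a / (1 + a) * (T * S / eps) <= X).
      { unfold X. replace (- (T1 n - T) * (S / eps)) with ((T - T1 n) * (S / eps)) by ring.
        replace (a / (1 + a) * (T * S / eps)) with ((a / (1 + a) * T) * (S / eps)) by (field; lra).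
        apply Rmult_le_compat_r; [apply Rmult_le_pos; [auto|left; apply Rinv_0_lt_compat; auto]|].
        assert (T1 n < T / (1 + a)).
        { apply (Rmult_lt_reg_l (1 + a)); [lra|]. replace ((1 + a) * (T / (1 + a))) with T by (field; lra). lra. }
        assert (a / (1 + a) * T = T - T / (1 + a)) by (field; lra). lra. }
      assert (HL : eps1 / eps <= a / (1 + a) * (T * S / eps) ).
      { assert (a / (1 + a) * L <= a / (1 + a) * (T * S / eps)).
        { apply Rmult_le_compat_l; [left; apply Rdiv_lt_0_compat; lra|lra]. }
        assert (a / (1 + a) * L = eps1 / eps + a / (1 + a)) by (unfold L; field; lra).
        assert (0 < a / (1 + a)) by (apply Rdiv_lt_0_compat; lra). lra. }
      assert (Hexp := exp_ge1 X).
      assert (eps * (1 + X) <= eps * exp X) by (apply Rmult_le_compat_l; lra).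
      assert (eps * (eps1 / eps) = eps1) by (field; lra).
      assert (eps * (eps1 / eps) <= eps * X) by (apply Rmult_le_compat_l; lra).
      lra. }
    assert (Hm := Es_mono (N n) (w n) (r n) (Hw n) (Hr n) T ((1 + a) * T1 n) HTle).
    assert (Hnn := Es_nonneg (N n) (w n) (r n) (Hw n) ((1 + a) * T1 n)).
    rewrite Rabs_right by lra. lra.
  - intros M.
    destruct (Hq eps1 ltac:(lra) (M / (eps1 * a))) as [n1 Hn1].
    exists (Nat.max n0 n1). intros n Hn.
    destruct (Ht1 n ltac:(lia)) as [-> [HT1p HT1e]].
    assert (HQ : M / (eps1 * a) < T1 n * Ss (N n) (w n) (r n) (T1 n) / eps1) by (apply Hn1; lia).
    set (Q := T1 n * Ss (N n) (w n) (r n) (T1 n) / eps1) in *.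
    assert (Hj := jensen (N n) (w n) (r n) (Hw n) (T1 n) ((1 - a) * T1 n) ltac:(lra)).
    rewrite HT1e in Hj.
    replace (- ((1 - a) * T1 n - T1 n) * (Ss (N n) (w n) (r n) (T1 n) / eps1)) with (a * Q) in Hj by (unfold Q; field; lra).
    assert (Hexp := exp_ge1 (a * Q)).
    assert (M < eps1 * (a * Q)).
    { apply (Rmult_lt_compat_l (eps1 * a)) in HQ; [|nra].
      replace (eps1 * a * (M / (eps1 * a))) with M in HQ by (field; lra). lra. }
    assert (eps1 * (1 + a * Q) <= eps1 * exp (a * Q)) by (apply Rmult_le_compat_l; lra).
    lra.
Qed.
End Family.

Section Transfer.
Variable N : nat -> nat.
Variables w r r' : nat -> nat -> R.
Hypothesis Hw : forall n i, (i < N n)%nat -> 0 <= w n i.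
Hypothesis Hr : forall n i, (i < N n)%nat -> 0 < r n i.
Hypothesis Hr' : forall n i, (i < N n)%nat -> 0 < r' n i.
Hypothesis Hsum : cv_infty (fun n => sumN (N n) (w n)).
Variables kappa C : R.
Hypothesis Hkappa : 1 <= kappa.
Hypothesis HC0 : 0 <= C.
Hypothesis Hk : forall n i, (i < N n)%nat -> r' n i <= kappa * r n i.
Hypothesis HC : forall n i, (i < N n)%nat -> r n i <= r' n i + C * r' n i ^ 2.
Hypothesis HT : exists es, 0 < es /\ forall M, exists n0, forall n, (n0 <= n)%nat ->
   forall t, Es (N n) (w n) (r' n) t <= es -> M < t.

Theorem transfer : cutoffE N w r -> cutoffE N w r'.
Proof. intros [tn [Htn Hcut]]. destruct HT as [es [Hes HTt]].
  apply (suff N w r' Hw Hr' Hsum es Hes).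
  intros eps Heps. apply NNPP. intros Hn.
  destruct (not_all_ex_not _ _ Hn) as [M0 HM0].
  assert (Hsub : forall n0, exists n, (n0 <= n)%nat /\
     Tm N w r' eps n * Ss (N n) (w n) (r' n) (Tm N w r' eps n) / eps <= M0).
  { intros n0. apply NNPP. intros Hn2. apply HM0. exists n0. intros n Hn3.
    apply Rnot_le_lt. intros Hle. apply Hn2. exists n. split; [lia|auto]. }
  set (Kc := 2 * Rabs M0 + 2).
  assert (HKc : 0 < Kc) by (unfold Kc; assert (0 <= Rabs M0) by apply Rabs_pos; lra).
  set (rho := 3 * kappa).
  set (cst := eps / 2 * exp (- ((rho - 1) * Kc) - rho * C * Kc ^ 2)).
  assert (Hcst : 0 < cst) by (unfold cst; apply Rmult_lt_0_compat; [lra|apply exp_pos]).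
  destruct (Hcut (1/2) ltac:(lra)) as [Hup Hlow].
  destruct (Hup cst Hcst) as [n1 Hn1].
  destruct (Hlow eps) as [n2 Hn2].
  destruct (HTt 1) as [n3 Hn3].
  destruct (eventually_big N w Hsum es) as [n4 Hn4].
  destruct (Hsub (Nat.max n1 (Nat.max n2 (Nat.max n3 n4)))) as [n [Hnn Hq]].
  destruct (Tm_spec N w r' Hw Hr' eps n) as [HTp HTe]; [split; [lra|]; apply Rle_lt_trans with es; [lra|apply Hn4; lia]|].
  set (T := Tm N w r' eps n) in *.
  assert (HT1 : 1 < T) by (apply (Hn3 n ltac:(lia)); lra).
  set (S := Ss (N n) (w n) (r' n) T) in *.
  assert (Hconc := markov_conc (N n) (w n) (r' n) (Hw n) (Hr' n) T Kc ltac:(lra) HKc).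
  fold S in Hconc. rewrite HTe in Hconc.
  assert (HS : 0 <= S) by (apply Ss_nonneg; auto).
  assert (HTS : T / Kc * S <= eps / 2).
  { assert (T * S <= M0 * eps).
    { apply (Rmult_le_compat_r eps) in Hq; [|lra]. unfold Rdiv in Hq.
      rewrite Rmult_assoc, Rinv_l, Rmult_1_r in Hq by lra. auto. }
    assert (M0 <= Rabs M0) by apply Rle_abs.
    assert (T * S <= Kc / 2 * eps) by (unfold Kc; nra).
    apply (Rmult_le_reg_l Kc); auto.
    replace (Kc * (T / Kc * S)) with (T * S) by (field; lra). lra. }
  assert (Hlowb := cmp_lower (N n) (w n) (r n) (r' n) C T rho Kc (Hw n) (Hr' n) (HC n) HC0 ltac:(lra) ltac:(unfold rho; lra) HKc).
  assert (HErho : cst <= Es (N n) (w n) (r n) (rho * T)).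
  { eapply Rle_trans; [|exact Hlowb]. unfold cst.
    rewrite (Rmult_comm (eps / 2)). apply Rmult_le_compat.
    - left; apply exp_pos.
    - lra.
    - apply exp_le. assert (rho * C * Kc ^ 2 / T <= rho * C * Kc ^ 2).
      { assert (0 <= rho * C * Kc ^ 2) by (apply Rmult_le_pos; [apply Rmult_le_pos; unfold rho; lra|apply pow2_ge_0]).
        unfold Rdiv. rewrite <- (Rmult_1_r (rho * C * Kc ^ 2)) at 2. apply Rmult_le_compat_l; auto.
        rewrite <- Rinv_1. apply Rinv_le_contravar; lra. }
      lra.
    - lra. }
  assert (Htn2 : (1 - 1/2) * tn n <= kappa * T).
  { apply Rnot_lt_le. intros Hlt.
    assert (H1 := cmp_upper (N n) (w n) (r n) (r' n) kappa ((1 - 1/2) * tn n) (Hw n) (Hk n) ltac:(lra)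
                 ltac:(assert (0 < tn n) by auto; lra)).
    assert (H2 : Es (N n) (w n) (r' n) ((1 - 1/2) * tn n / kappa) <= Es (N n) (w n) (r' n) T).
    { apply Es_mono; auto. apply (Rmult_le_reg_l kappa); [lra|].
      replace (kappa * ((1 - 1/2) * tn n / kappa)) with ((1 - 1/2) * tn n) by (field; lra). lra. }
    assert (H3 : eps < Es (N n) (w n) (r n) ((1 - 1/2) * tn n)) by (apply Hn2; lia).
    lra. }
  assert (H4 : Es (N n) (w n) (r n) (rho * T) <= Es (N n) (w n) (r n) ((1 + 1/2) * tn n)).
  { apply Es_mono; auto. unfold rho. lra. }
  assert (H5 := Hn1 n ltac:(lia)). unfold R_dist in H5. rewrite Rminus_0_r in H5.
  rewrite Rabs_right in H5 by (apply Rle_ge, Es_nonneg; auto).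
  lra.
Qed.
End Transfer.

From Stdlib Require Import Reals ZArith ClassicalEpsilon Lra Lia Classical.

Module Spec.
From HB Require Import structures.
From mathcomp Require Import all_boot all_algebra.
From mathcomp Require Import complex Rstruct ring.
Import GRing.Theory Num.Theory.
Local Open Scope ring_scope.
Local Open Scope sesquilinear_scope.

Lemma sumN_big N (h : nat -> R) : sumN N h = \sum_(i < N) h i.
Proof. elim: N => [|N IH] /=; first by rewrite big_ord0.
by rewrite big_ord_recr /= IH. Qed.

Definition rc (x : R) : R[i] := Complex x 0.
Notation ReC := (@complex.Re R).
Notation ImC := (@complex.Im R).
Lemma conjCE (x : R[i]) : x^* = conjc x.
Proof. reflexivity. Qed.

Lemma Re_conjM (a b : R[i]) (l : R) : ReC (a^* * rc l * b) = (ReC a * ReC b + ImC a * ImC b) * l.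
Proof. case: a => a1 a2; case: b => b1 b2 /=. ring. Qed.

Lemma Im_conjM (a b : R[i]) (l : R) : ImC (a^* * rc l * b) = (ReC a * ImC b - ImC a * ReC b) * l.
Proof. case: a => a1 a2; case: b => b1 b2 /=. ring. Qed.

Lemma rcD x y : rc (x + y) = rc x + rc y.
Proof. by rewrite /rc; congr Complex; rewrite addr0. Qed.
Lemma rcM x y : rc (x * y) = rc x * rc y.
Proof. by rewrite /rc; congr Complex; rewrite ?(mulr0, mul0r, addr0, subr0). Qed.
Lemma rc0 : rc 0 = 0. Proof. by []. Qed.
Lemma rc1 : rc 1 = 1. Proof. by []. Qed.
Lemma rc_sum n (h : 'I_n -> R) : rc (\sum_(i < n) h i) = \sum_(i < n) rc (h i).
Proof. elim: n h => [|n IH] h; first by rewrite !big_ord0. 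
by rewrite !big_ord_recr /= rcD IH. Qed.
Lemma ReD (x y : R[i]) : ReC (x + y) = ReC x + ReC y. Proof. by case: x; case: y. Qed.
Lemma ImD (x y : R[i]) : ImC (x + y) = ImC x + ImC y. Proof. by case: x; case: y. Qed.
Lemma Re_sum n (h : 'I_n -> R[i]) : ReC (\sum_(i < n) h i) = \sum_(i < n) ReC (h i).
Proof. elim: n h => [|n IH] h; first by rewrite !big_ord0. 
by rewrite !big_ord_recr /= ReD IH. Qed.
Lemma Im_sum n (h : 'I_n -> R[i]) : ImC (\sum_(i < n) h i) = \sum_(i < n) ImC (h i).
Proof. elim: n h => [|n IH] h; first by rewrite !big_ord0. 
by rewrite !big_ord_recr /= ImD IH. Qed.
Lemma Re_rcM (x : R[i]) l : ReC (x * rc l) = ReC x * l.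
Proof. case: x => a b /=; ring. Qed.
Lemma Im_rcM (x : R[i]) l : ImC (x * rc l) = ImC x * l.
Proof. case: x => a b /=; ring. Qed.
Lemma Re_rcMl (x : R[i]) l : ReC (rc l * x) = l * ReC x.
Proof. case: x => a b /=; ring. Qed.
Lemma Im_rcMl (x : R[i]) l : ImC (rc l * x) = l * ImC x.
Proof. case: x => a b /=; ring. Qed.
Lemma Re_normsq (x : R[i]) : ReC (x * x^*) = ReC x ^+ 2 + ImC x ^+ 2.
Proof. case: x => a b /=; ring. Qed.
Lemma rc_conj x : (rc x)^* = rc x.
Proof. by rewrite conjCE /rc; congr Complex; rewrite oppr0. Qed.

Section S.
Variable n : nat.
Variable B : nat -> nat -> R.
Variable z : nat -> R.
Hypothesis Bsym : forall x y, (x < n.+1)%N -> (y < n.+1)%N -> B x y = B y x.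

Definition Bm : 'M[R[i]]_n.+1 := \matrix_(x, y) rc (B x y).

Lemma Bm_herm : Bm \is hermsymmx.
Proof. apply/is_hermitianmxP; rewrite expr0 scale1r; apply/matrixP => x y.
by rewrite !mxE rc_conj Bsym. Qed.

Definition P := spectralmx Bm.
Definition D := spectral_diag Bm.

Lemma P_unitary : P \is unitarymx.
Proof. exact: spectral_unitarymx. Qed.

Lemma Bm_spec : Bm = P^t* *m diag_mx D *m P.
Proof. rewrite -invmx_unitary; last exact: P_unitary.
by apply/orthomx_spectralP; apply: hermitian_normalmx; apply: Bm_herm. Qed.

Lemma D_real i : D 0 i = rc (ReC (D 0 i)).
Proof. have /mxOverP H := hermitian_spectral_diag_real Bm_herm.
have := RRe_real (H 0 i). by []. Qed.


Lemma Pinv : P^t* *m P = 1%:M.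
Proof. by rewrite -[P^t*]mul1mx mulmxKtV //; exact: P_unitary. Qed.

Lemma Pinv' : P *m P^t* = 1%:M.
Proof. by apply/unitarymxP; exact: P_unitary. Qed.

Definition Dk k : 'rV[R[i]]_n.+1 := \row_i (D 0 i) ^+ k.

Lemma diag_mul (u v : 'rV[R[i]]_n.+1) : diag_mx u *m diag_mx v = diag_mx (\row_i (u 0 i * v 0 i)).
Proof. apply/matrixP => i j; rewrite mul_diag_mx !mxE; case: (eqVneq i j) => [->|]; 
  rewrite ?mulr1n ?mulr0n ?mulr0 //. Qed.

Lemma Bm_pow k : Bm ^+ k = P^t* *m diag_mx (Dk k) *m P.
Proof. elim: k => [|k IH].
  have -> : Dk 0 = const_mx 1 by apply/matrixP => i j; rewrite !mxE expr0.
  by rewrite expr0 diag_const_mx mulmx1 Pinv.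
rewrite exprSr IH {1}Bm_spec -mulmxE.
rewrite -!mulmxA (mulmxA P) Pinv' mul1mx !mulmxA -(mulmxA _ (diag_mx (Dk k))) diag_mul.
congr (_ *m _ *m _); congr (diag_mx _); apply/matrixP => i j; rewrite !mxE exprSr.
by []. Qed.

Lemma entry_formula (d : 'rV[R[i]]_n.+1) x y :
  (P^t* *m diag_mx d *m P) x y = \sum_i (P i x)^* * d 0 i * P i y.
Proof. rewrite mxE; apply: eq_bigr => i _; rewrite mul_mx_diag !mxE. by []. Qed.

Lemma Bm_Kpow k (x y : 'I_n.+1) : (Bm ^+ k) x y = rc (Kpow n.+1 B k x y).
Proof. elim: k x y => [|k IH] x y.
  rewrite expr0 mxE /=. case: (eqVneq x y) => [->|Hne].
    by rewrite Nat.eqb_refl.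
  have -> : Nat.eqb x y = false by apply/Nat.eqb_neq => /val_inj/eqP; rewrite (negbTE Hne).
  by [].
rewrite exprSr -mulmxE mxE.
change (Kpow n.+1 B k.+1 x y) with (sumN n.+1 (fun j => Kpow n.+1 B k x j * B j y)).
rewrite sumN_big rc_sum; apply: eq_bigr => j _.
by rewrite IH !mxE rcM. Qed.

Lemma rcX a k : rc (a ^+ k) = (rc a) ^+ k.
Proof. elim: k => [|k IH]; first by rewrite !expr0. by rewrite !exprSr rcM IH. Qed.

Lemma eigen_eq : P *m Bm = diag_mx D *m P.
Proof. by rewrite {1}Bm_spec !mulmxA Pinv' mul1mx. Qed.


Definition lam (i : nat) : R := ReC (D 0 (inord i)).
Definition fv (i x : nat) : R := ReC (P (inord i) (inord x)).
Definition gv (i x : nat) : R := ImC (P (inord i) (inord x)).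

Lemma Dk_rc k (i : 'I_n.+1) : Dk k 0 i = rc (lam i ^+ k).
Proof. by rewrite mxE rcX /lam inord_val -D_real. Qed.

Lemma E4 k x y : (x < n.+1)%N -> (y < n.+1)%N ->
  Kpow n.+1 B k x y = sumN n.+1 (fun i => (fv i x * fv i y + gv i x * gv i y) * pow (lam i) k) /\
  0 = sumN n.+1 (fun i => (fv i x * gv i y - gv i x * fv i y) * pow (lam i) k).
Proof. move=> Hx Hy.
have E : rc (Kpow n.+1 B k x y) = (Bm ^+ k) (inord x) (inord y) by rewrite Bm_Kpow !inordK.
have E' := E; rewrite Bm_pow entry_formula in E'.
split.
- have -> : Kpow n.+1 B k x y = ReC (rc (Kpow n.+1 B k x y)) by [].
  rewrite E' Re_sum sumN_big; apply: eq_bigr => i _.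
  by rewrite Dk_rc Re_conjM /fv /gv inord_val RpowE.
- suff H : ImC (rc (Kpow n.+1 B k x y)) = sumN n.+1 (fun i => (fv i x * gv i y - gv i x * fv i y) * pow (lam i) k) by rewrite -H.
  rewrite E' Im_sum sumN_big; apply: eq_bigr => i _.
  by rewrite Dk_rc Im_conjM /fv /gv inord_val RpowE.
Qed.

Lemma E1 i y : (i < n.+1)%N -> (y < n.+1)%N ->
  sumN n.+1 (fun x => B y x * fv i x) = lam i * fv i y /\
  sumN n.+1 (fun x => B y x * gv i x) = lam i * gv i y.
Proof. move=> Hi Hy.
have := eigen_eq; rewrite mul_diag_mx; move/matrixP => /(_ (inord i) (inord y)).
rewrite !mxE => E.
have E2 : \sum_j P (inord i) j * rc (B j y) = rc (lam i) * P (inord i) (inord y).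
  rewrite /lam -D_real -E; apply: eq_bigr => j _; rewrite !mxE inordK //.
split.
- rewrite {2}/fv; have := congr1 ReC E2; rewrite Re_sum Re_rcMl => <-.
  rewrite sumN_big; apply: eq_bigr => j _.
  by rewrite Re_rcM /fv inord_val Bsym // mulrC.
- rewrite {2}/gv; have := congr1 ImC E2; rewrite Im_sum Im_rcMl => <-.
  rewrite sumN_big; apply: eq_bigr => j _.
  by rewrite Im_rcM /gv inord_val Bsym // mulrC.
Qed.


Definition sv i := sumN n.+1 (fun x => z x * fv i x).
Definition tv i := sumN n.+1 (fun x => z x * gv i x).

Lemma E3 (d : nat -> R) :
  (forall y, (y < n.+1)%N -> sumN n.+1 (fun i => (sv i * gv i y - tv i * fv i y) * d i) = 0) ->
  sumN n.+1 (fun y => pow (sumN n.+1 (fun i => (sv i * fv i y + tv i * gv i y) * d i)) 2)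
  = sumN n.+1 (fun i => (pow (sv i) 2 + pow (tv i) 2) * pow (d i) 2).
Proof. move=> Hd.
pose zc : 'rV[R[i]]_n.+1 := \row_x rc (z x).
pose c := zc *m P^t*.
pose v : 'rV[R[i]]_n.+1 := \row_i (c 0 i * rc (d i)).
pose u := v *m P.
have key : \sum_y u 0 y * (u 0 y)^* = \sum_i v 0 i * (v 0 i)^*.
  have E1' : (u *m u^t*) 0 0 = \sum_y u 0 y * (u 0 y)^*.
    by rewrite mxE; apply: eq_bigr => y _; rewrite !mxE.
  have E2' : (v *m v^t*) 0 0 = \sum_i v 0 i * (v 0 i)^*.
    by rewrite mxE; apply: eq_bigr => y _; rewrite !mxE.
  rewrite -E1' -E2' /u trmx_mul map_mxM !mulmxA -(mulmxA v) Pinv' mulmx1 //.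
have Rec i : ReC (c 0 i) = sv (nat_of_ord i).
  rewrite /c mxE Re_sum /sv sumN_big; apply: eq_bigr => x _.
  rewrite !mxE /fv !inord_val. case: (P i x) => a b /=. ring.
have Imc i : ImC (c 0 i) = - tv (nat_of_ord i).
  rewrite /c mxE Im_sum /tv sumN_big -sumrN; apply: eq_bigr => x _.
  rewrite !mxE /gv !inord_val. case: (P i x) => a b /=. ring.
have Reu y : ReC (u 0 y) = sumN n.+1 (fun i => (sv i * fv i y + tv i * gv i y) * d i).
  rewrite /u mxE Re_sum sumN_big; apply: eq_bigr => i _.
  rewrite mxE /fv /gv !inord_val.
  have := Rec i; have := Imc i; case: (c 0 i) => a b /= -> ->.
  case: (P i y) => p q /=. ring.
have Imu y : ImC (u 0 y) = sumN n.+1 (fun i => (sv i * gv i y - tv i * fv i y) * d i).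
  rewrite /u mxE Im_sum sumN_big; apply: eq_bigr => i _.
  rewrite mxE /fv /gv !inord_val.
  have := Rec i; have := Imc i; case: (c 0 i) => a b /= -> ->.
  case: (P i y) => p q /=. ring.
have := congr1 ReC key; rewrite !Re_sum => H.
rewrite !sumN_big.
transitivity (\sum_(y < n.+1) ReC (u 0 y * (u 0 y)^* )).
  apply: eq_bigr => y _. by rewrite RpowE Re_normsq Reu Imu Hd // expr0n /= addr0.
transitivity (\sum_(i < n.+1) ReC (v 0 i * (v 0 i)^* )); first exact: H.
apply: eq_bigr => i _.
rewrite !RpowE Re_normsq mxE.
have := Rec i; have := Imc i; case: (c 0 i) => a b /= -> ->. ring.
Qed.

End S.

Lemma spectral_real N B z : (forall x y, (x < N)%coq_nat -> (y < N)%coq_nat -> B x y = B y x) ->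
  spec_concl N B z.
Proof. case: N => [|n] Hsym.
  exists (fun _ => 0), (fun _ _ => 0), (fun _ _ => 0). split; last split.
  - by move=> i y Hi; lia.
  - by move=> k x y Hx; lia.
  - by move=> d _; reflexivity.
have Bs : forall x y, (x < n.+1)%N -> (y < n.+1)%N -> B x y = B y x.
  by move=> x y /ltP Hx /ltP Hy; apply: Hsym.
exists (lam n B), (fv n B), (gv n B). split; last split.
- move=> i y /ltP Hi /ltP Hy. exact: (E1 n B Bs i y Hi Hy).
- move=> k x y /ltP Hx /ltP Hy. exact: (E4 n B Bs k x y Hx Hy).
- move=> d Hd. apply: (E3 n B z d). move=> y /ltP Hy. exact: (Hd y Hy).
Qed.

End Spec.

From Stdlib Require Import Reals ZArith ClassicalEpsilon Lra Lia Classical.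
Open Scope R_scope.

Lemma Un_cv_ext (a b : nat -> R) l : (forall m, a m = b m) -> Un_cv a l -> Un_cv b l.
Proof. intros H Ha eps He. destruct (Ha eps He) as [M HM]. exists M. intros m Hm.
  rewrite <- H. auto. Qed.

Lemma Un_cv_const (l : R) : Un_cv (fun _ => l) l.
Proof. intros eps He. exists 0%nat. intros. unfold R_dist. rewrite Rminus_diag, Rabs_R0. auto. Qed.

Lemma series_exp t l : Un_cv (fun m => sum_f_R0 (fun k => t ^ k / INR (fact k) * l ^ k) m) (exp (t * l)).
Proof. apply (Un_cv_ext (E1 (t * l))); [|apply E1_cvg].
  intros m. unfold E1. apply sum_eq. intros i _. rewrite Rpow_mult_distr. unfold Rdiv. ring. Qed.

Lemma series_comb t N (c l : nat -> R) :
  Un_cv (fun m => sum_f_R0 (fun k => t ^ k / INR (fact k) * sumN N (fun i => c i * l i ^ k)) m)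
        (sumN N (fun i => c i * exp (t * l i))).
Proof. induction N; simpl.
  - apply (Un_cv_ext (fun _ => 0)); [|apply Un_cv_const].
    intros m. induction m; simpl; [ring|]. rewrite <- IHm. ring.
  - apply (Un_cv_ext (fun m => sum_f_R0 (fun k => t ^ k / INR (fact k) * sumN N (fun i => c i * l i ^ k)) m
        + c N * sum_f_R0 (fun k => t ^ k / INR (fact k) * l N ^ k) m)).
    + intros m. rewrite scal_sum, <- sum_plus. apply sum_eq. intros; ring.
    + apply CV_plus; auto. apply CV_mult; [apply Un_cv_const|apply series_exp].
Qed.

Lemma series_val_eq (a : nat -> R) l : Un_cv (fun m => sum_f_R0 a m) l -> series_val a = l.
Proof. intros H. unfold series_val.
  assert (Hs := epsilon_spec (inhabits 0) (fun l => Un_cv (fun m => sum_f_R0 a m) l) (ex_intro _ l H)).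
  simpl in Hs. eapply UL_sequence; eauto. Qed.

Lemma comb_uniq t N (c1 c2 l : nat -> R) (A : R) :
  (forall k, sumN N (fun i => c1 i * l i ^ k) = A + sumN N (fun i => c2 i * l i ^ k)) ->
  sumN N (fun i => c1 i * exp (t * l i)) = A * exp t + sumN N (fun i => c2 i * exp (t * l i)).
Proof. intros H. eapply UL_sequence; [apply (series_comb t N c1 l)|].
  apply (Un_cv_ext (fun m => A * sum_f_R0 (fun k => t ^ k / INR (fact k) * 1 ^ k) m
     + sum_f_R0 (fun k => t ^ k / INR (fact k) * sumN N (fun i => c2 i * l i ^ k)) m)).
  - intros m. rewrite scal_sum, <- sum_plus. apply sum_eq. intros k _. rewrite H, pow1. ring.
  - apply CV_plus; [apply CV_mult; [apply Un_cv_const|]|apply series_comb].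
    assert (He := series_exp t 1). rewrite Rmult_1_r in He. exact He.
Qed.

Lemma helper_zsum N (z a b : nat -> R) p q r :
  sumN N (fun x => z x * ((a x * p + b x * q) * r)) =
  (sumN N (fun x => z x * a x) * p + sumN N (fun x => z x * b x) * q) * r.
Proof. rewrite (sumN_ext N _ (fun x => (z x * a x) * (p * r) + (z x * b x) * (q * r))) by (intros; ring).
  rewrite sumN_plus, <- !sumN_scal_r. ring. Qed.

Section Rep.
Variable N : nat.
Variable K : nat -> nat -> R.
Variables pi mu : nat -> R.
Variable c : R.
Hypothesis HN : (1 <= N)%nat.
Hypothesis HK : is_markov_kernel N K.
Hypothesis Hirr : irreducible N K.
Hypothesis Hpi : is_prob N pi.
Hypothesis Hpipos : forall x, (x < N)%nat -> 0 < pi x.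
Hypothesis Hrev : reversible N K pi.
Hypothesis Hmu : is_prob N mu.
Hypothesis Hc : 1/2 < c.
Hypothesis Hcx : forall x, (x < N)%nat -> c <= K x x.

Definition zz x := (mu x - pi x) / sq pi x.

Lemma muK_minus k y : (y < N)%nat ->
  sumN N (fun x => mu x * Kpow N K k x y) - pi y =
  sq pi y * sumN N (fun x => zz x * Kpow N (Bs K pi) k x y).
Proof. intros Hy. rewrite <- (stationary N K pi HK Hrev k y Hy) at 1.
  rewrite <- sumN_minus, sumN_scal. apply sumN_ext. intros x Hx.
  rewrite Kpow_Bs by auto. unfold zz.
  assert (0 < sq pi x) by (apply (sq_pos N); auto). assert (0 < sq pi y) by (apply (sq_pos N); auto).
  field. lra. Qed.

Lemma L2dist_sq (nu : nat -> R) :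
  (L2dist N pi nu) ^ 2 = sumN N (fun y => (nu y / pi y - 1) ^ 2 * pi y).
Proof. unfold L2dist. rewrite pow2_sqrt; auto. apply sumN_nonneg. intros y Hy.
  apply Rmult_le_pos; [apply pow2_ge_0| left; auto]. Qed.

Lemma term_rewrite (S p s : R) : 0 < p -> s * s = p -> 0 < s ->
  (S / p - 1) ^ 2 * p = ((S - p) / s) ^ 2.
Proof. intros Hp Hs Hs0. rewrite <- Hs. field. lra. Qed.


Lemma helper_zsum' N' (z a b : nat -> R) p q r :
  sumN N' (fun x => z x * ((a x * p - b x * q) * r)) =
  (sumN N' (fun x => z x * a x) * p - sumN N' (fun x => z x * b x) * q) * r.
Proof. rewrite (sumN_ext N' _ (fun x => (z x * a x) * (p * r) - (z x * b x) * (q * r))) by (intros; ring).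
  rewrite sumN_minus, <- !sumN_scal_r. ring. Qed.

Lemma eig_lemma (v : nat -> R) (l : R) :
  (forall y, (y < N)%nat -> sumN N (fun x => Bs K pi y x * v x) = l * v y) ->
  sumN N (fun x => zz x * v x) <> 0 -> 2 * c - 1 <= l < 1.
Proof. intros He Hz.
  set (h := fun x => v x / sq pi x).
  assert (Kh : forall y, (y < N)%nat -> sumN N (fun x => K y x * h x) = l * h y).
  { intros y Hy. assert (0 < sq pi y) by (apply (sq_pos N); auto).
    apply (Rmult_eq_reg_l (sq pi y)); [|lra].
    rewrite sumN_scal. transitivity (l * v y).
    - rewrite <- He by auto. apply sumN_ext. intros x Hx. unfold h, Bs. 
      assert (0 < sq pi x) by (apply (sq_pos N); auto). field. lra.
    - unfold h. field. lra. }
  assert (Hv : forall x, (x < N)%nat -> v x = h x * sq pi x).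
  { intros x Hx. unfold h. assert (0 < sq pi x) by (apply (sq_pos N); auto). field. lra. }
  assert (Hne : exists x, (x < N)%nat /\ h x <> 0).
  { apply NNPP. intros Hn. apply Hz. rewrite (sumN_ext N _ (fun _ => 0)); [apply sumN_0|].
    intros x Hx. rewrite Hv by auto. destruct (Req_dec (h x) 0) as [E|E]; [rewrite E; ring|].
    exfalso; apply Hn; exists x; auto. }
  assert (Hb := eigen_bound N K HK c l h Hcx Kh Hne).
  assert (Hl : 2 * c - 1 <= l <= 1) by (unfold Rabs in Hb; destruct (Rcase_abs (l - c)); lra).
  split; [lra|]. destruct (Rle_lt_or_eq_dec l 1) as [|E]; [lra|auto|]. exfalso.
  subst l. destruct (harmonic_const N K HK Hirr h) as [C HC].
  { intros x Hx. rewrite Kh by auto. ring. }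
  { auto. }
  apply Hz. rewrite (sumN_ext N _ (fun x => C * (mu x - pi x))).
  - rewrite <- sumN_scal, sumN_minus. destruct Hmu as [_ E1]. destruct Hpi as [_ E2]. rewrite E1, E2. ring.
  - intros x Hx. rewrite Hv, HC by auto. unfold zz. assert (0 < sq pi x) by (apply (sq_pos N); auto).
    field. lra. Qed.

Lemma chain_rep : exists w lam : nat -> R,
  (forall i, (i < N)%nat -> 0 <= w i /\ (0 < w i -> 2 * c - 1 <= lam i < 1)) /\
  (forall m, (Defs.d2 N K pi mu m) ^ 2 = sumN N (fun i => w i * (lam i ^ m) ^ 2)) /\
  (forall t, (d2c N K pi mu t) ^ 2 = sumN N (fun i => w i * exp (-2 * t * (1 - lam i)))) /\
  sumN N w = sumN N (fun y => mu y ^ 2 / pi y) - 1.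
Proof.
destruct (Spec.spectral_real N (Bs K pi) zz (fun x y Hx Hy => Bs_sym N K pi Hpipos Hrev x y Hx Hy))
  as [lam [f [g [HE1 [HE4 HE3]]]]].
assert (Q1 : forall k y, (y < N)%nat -> sumN N (fun x => zz x * Kpow N (Bs K pi) k x y) =
  sumN N (fun i => (sumN N (fun x => zz x * f i x) * f i y + sumN N (fun x => zz x * g i x) * g i y) * lam i ^ k)).
{ intros k y Hy.
  rewrite (sumN_ext N _ (fun x => sumN N (fun i => zz x * ((f i x * f i y + g i x * g i y) * lam i ^ k)))).
  - rewrite sumN_exchange. apply sumN_ext; intros i _. apply helper_zsum.
  - intros x Hx. rewrite (proj1 (HE4 k x y Hx Hy)), sumN_scal. auto. }
assert (Q2 : forall k y, (y < N)%nat -> 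
  sumN N (fun i => (sumN N (fun x => zz x * f i x) * g i y - sumN N (fun x => zz x * g i x) * f i y) * lam i ^ k) = 0).
{ intros k y Hy.
  transitivity (sumN N (fun x => zz x * sumN N (fun i => (f i x * g i y - g i x * f i y) * lam i ^ k))).
  - rewrite (sumN_ext N (fun x => zz x * _) (fun x => sumN N (fun i => zz x * ((f i x * g i y - g i x * f i y) * lam i ^ k)))).
    + rewrite sumN_exchange. apply sumN_ext; intros i _. symmetry. apply helper_zsum'.
    + intros x Hx. rewrite sumN_scal. auto.
  - rewrite (sumN_ext N _ (fun _ => 0)); [apply sumN_0|].
    intros x Hx. rewrite <- (proj2 (HE4 k x y Hx Hy)). ring. }
assert (HD : forall m, (Defs.d2 N K pi mu m) ^ 2 = sumN N (fun i =>
   (sumN N (fun x => zz x * f i x) ^ 2 + sumN N (fun x => zz x * g i x) ^ 2) * (lam i ^ m) ^ 2)).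
{ intros m. unfold Defs.d2. rewrite L2dist_sq.
  rewrite (sumN_ext N _ (fun y => (sumN N (fun i => (sumN N (fun x => zz x * f i x) * f i y
        + sumN N (fun x => zz x * g i x) * g i y) * lam i ^ m)) ^ 2)).
  - apply (HE3 (fun i => lam i ^ m)). intros y Hy. apply Q2; auto.
  - intros y Hy. rewrite (term_rewrite _ _ (sq pi y)); [|auto|apply (sq_sq N); auto|apply (sq_pos N); auto].
    rewrite muK_minus, Q1 by auto. assert (0 < sq pi y) by (apply (sq_pos N); auto). field. lra. }
assert (HKrep : forall k x y, (x < N)%nat -> (y < N)%nat -> Kpow N K k x y =
  sumN N (fun i => (sq pi y / sq pi x * (f i x * f i y + g i x * g i y)) * lam i ^ k)).
{ intros k x y Hx Hy. assert (0 < sq pi x) by (apply (sq_pos N); auto). assert (0 < sq pi y) by (apply (sq_pos N); auto).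
  transitivity (sq pi y / sq pi x * Kpow N (Bs K pi) k x y).
  - rewrite Kpow_Bs by auto. field. lra.
  - rewrite (proj1 (HE4 k x y Hx Hy)), sumN_scal. apply sumN_ext; intros; ring. }
assert (HV : forall t x y, (x < N)%nat -> (y < N)%nat ->
  series_val (fun k => t ^ k / INR (fact k) * Kpow N K k x y) =
  sumN N (fun i => (sq pi y / sq pi x * (f i x * f i y + g i x * g i y)) * exp (t * lam i))).
{ intros t x y Hx Hy. apply series_val_eq.
  eapply Un_cv_ext; [|apply series_comb]. intros m. apply sum_eq. intros k _. rewrite HKrep by auto. auto. }
assert (HS : forall t y, (y < N)%nat -> sumN N (fun x => mu x * Ht N K t x y) =
  exp (- t) * (pi y * exp t + sumN N (fun i => (sq pi y * (sumN N (fun x => zz x * f i x) * f i y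
        + sumN N (fun x => zz x * g i x) * g i y)) * exp (t * lam i)))).
{ intros t y Hy. unfold Ht.
  rewrite (sumN_ext N _ (fun x => exp (- t) * (mu x * sumN N (fun i => (sq pi y / sq pi x * (f i x * f i y + g i x * g i y)) * exp (t * lam i))))).
  2:{ intros x Hx. rewrite HV by auto. ring. }
  rewrite <- sumN_scal. f_equal.
  rewrite (sumN_ext N _ (fun x => sumN N (fun i => mu x * (sq pi y / sq pi x * (f i x * f i y + g i x * g i y)) * exp (t * lam i)))).
  2:{ intros x Hx. rewrite sumN_scal. apply sumN_ext; intros; ring. }
  rewrite sumN_exchange.
  rewrite (sumN_ext N _ (fun i => sumN N (fun x => mu x * (sq pi y / sq pi x * (f i x * f i y + g i x * g i y))) * exp (t * lam i))).
  2:{ intros i Hi. rewrite sumN_scal_r. auto. }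
  apply comb_uniq. intros k.
  transitivity (sumN N (fun x => mu x * Kpow N K k x y)).
  - rewrite (sumN_ext N (fun x => mu x * _) (fun x => sumN N (fun i => mu x * (sq pi y / sq pi x * (f i x * f i y + g i x * g i y)) * lam i ^ k))).
    + rewrite sumN_exchange. apply sumN_ext. intros i _. rewrite sumN_scal_r. auto.
    + intros x Hx. rewrite HKrep, sumN_scal by auto. apply sumN_ext; intros; ring.
  - assert (Hm := muK_minus k y Hy). rewrite Q1 in Hm by auto.
    rewrite sumN_scal in Hm.
    replace (sumN N (fun x => mu x * Kpow N K k x y)) with
      (pi y + (sumN N (fun x => mu x * Kpow N K k x y) - pi y)) by ring.
    rewrite Hm. f_equal. apply sumN_ext; intros; ring. }
assert (Hb : forall t y, (y < N)%nat -> sumN N (fun i => (sumN N (fun x => zz x * f i x) * g i y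
        - sumN N (fun x => zz x * g i x) * f i y) * exp (t * lam i)) = 0).
{ intros t y Hy. rewrite (comb_uniq t N _ (fun _ => 0) lam 0).
  - rewrite (sumN_ext N _ (fun _ => 0)) by (intros; ring). rewrite sumN_0. ring.
  - intros k. rewrite Q2 by auto. rewrite (sumN_ext N _ (fun _ => 0)) by (intros; ring). rewrite sumN_0. ring. }
assert (HC : forall t, (d2c N K pi mu t) ^ 2 = sumN N (fun i =>
   (sumN N (fun x => zz x * f i x) ^ 2 + sumN N (fun x => zz x * g i x) ^ 2) * exp (-2 * t * (1 - lam i)))).
{ intros t. unfold d2c. rewrite L2dist_sq.
  rewrite (sumN_ext N _ (fun y => (sumN N (fun i => (sumN N (fun x => zz x * f i x) * f i y
        + sumN N (fun x => zz x * g i x) * g i y) * exp (- t * (1 - lam i)))) ^ 2)).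
  - rewrite (HE3 (fun i => exp (- t * (1 - lam i)))).
    + apply sumN_ext. intros i _. f_equal. simpl. rewrite Rmult_1_r, <- exp_plus. f_equal. ring.
    + intros y Hy. transitivity (exp (- t) * sumN N (fun i => (sumN N (fun x => zz x * f i x) * g i y
        - sumN N (fun x => zz x * g i x) * f i y) * exp (t * lam i))); [|rewrite Hb by auto; ring].
      rewrite (sumN_scal N (exp (- t))).
      apply sumN_ext. intros i _. replace (- t * (1 - lam i)) with (- t + t * lam i) by ring.
      rewrite exp_plus. ring.
  - intros y Hy. rewrite (term_rewrite _ _ (sq pi y)); [|auto|apply (sq_sq N); auto|apply (sq_pos N); auto].
    f_equal. rewrite HS by auto. assert (0 < sq pi y) by (apply (sq_pos N); auto).
    assert (Et : exp (- t) * exp t = 1) by (rewrite <- exp_plus, Rplus_opp_l, exp_0; auto).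
    rewrite Rmult_plus_distr_l.
    replace (exp (- t) * (pi y * exp t)) with (pi y * (exp (- t) * exp t)) by ring. rewrite Et.
    rewrite (sumN_scal N (exp (- t))). unfold Rdiv.
    replace (pi y * 1 + sumN N (fun i => exp (- t) * (sq pi y * (sumN N (fun x => zz x * f i x) * f i y +
      sumN N (fun x => zz x * g i x) * g i y) * exp (t * lam i))) - pi y) with
      (sq pi y * sumN N (fun i => (sumN N (fun x => zz x * f i x) * f i y +
      sumN N (fun x => zz x * g i x) * g i y) * exp (- t * (1 - lam i)))).
    + field. lra.
    + rewrite sumN_scal. ring_simplify. apply sumN_ext. intros i _.
      replace (- t * (1 - lam i)) with (- t + t * lam i) by ring. rewrite exp_plus. ring. }
exists (fun i => sumN N (fun x => zz x * f i x) ^ 2 + sumN N (fun x => zz x * g i x) ^ 2), lam.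
split; [|split; [exact HD|split; [exact HC|]]].
- intros i Hi. split; [apply Rplus_le_le_0_compat; apply pow2_ge_0|].
  intros Hw.
  destruct (Req_dec (sumN N (fun x => zz x * f i x)) 0) as [E|E].
  + assert (sumN N (fun x => zz x * g i x) <> 0).
    { intros E'. rewrite E, E' in Hw. simpl in Hw. lra. }
    apply (eig_lemma (g i)); auto. intros y Hy. apply (HE1 i y Hi Hy).
  + apply (eig_lemma (f i)); auto. intros y Hy. apply (HE1 i y Hi Hy).
- assert (H0 := HD 0%nat).
  rewrite (sumN_ext N _ (fun i => sumN N (fun x => zz x * f i x) ^ 2 + sumN N (fun x => zz x * g i x) ^ 2)) in H0 by (intros; simpl; ring).
  rewrite <- H0. unfold Defs.d2. rewrite L2dist_sq.
  rewrite (sumN_ext N _ (fun y => mu y ^ 2 / pi y - 2 * mu y + pi y)).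
  + rewrite sumN_plus, sumN_minus, <- sumN_scal. destruct Hmu as [_ E1]. destruct Hpi as [_ E2]. rewrite E1, E2. ring.
  + intros y Hy. simpl Kpow. rewrite (sumN_ext N _ (fun x => if Nat.eqb x y then mu x else 0)).
    * rewrite sumN_delta' by auto. assert (0 < pi y) by auto. field. lra.
    * intros x Hx. destruct (Nat.eqb_spec x y); ring.
Qed.

End Rep.

From Stdlib Require Import Reals ZArith ClassicalEpsilon Lra Lia Classical.
Open Scope R_scope.

Lemma ln_le_minus1 x : 0 < x -> ln x <= x - 1.
Proof. intros Hx. assert (H := exp_ge1 (ln x)). rewrite exp_ln in H by auto. lra. Qed.

Lemma rates_cmp (beta l : R) : 0 < beta -> beta <= l < 1 ->
  2 * (1 - l) <= - 2 * ln l /\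
  - 2 * ln l <= (1 / beta) * (2 * (1 - l)) /\
  - 2 * ln l <= 2 * (1 - l) + (1 / (2 * beta)) * (2 * (1 - l)) ^ 2 /\
  0 < 2 * (1 - l) /\ 0 < - 2 * ln l.
Proof. intros Hb [Hl1 Hl2].
  assert (Hl0 : 0 < l) by lra.
  assert (H1 := ln_le_minus1 l Hl0).
  assert (H2 : - ln l <= (1 - l) / l).
  { assert (H := ln_le_minus1 (/ l) ltac:(apply Rinv_0_lt_compat; lra)).
    rewrite ln_Rinv in H by lra. replace ((1 - l) / l) with (/ l - 1) by (field; lra). lra. }
  assert (H3 : (1 - l) / l <= (1 - l) / beta).
  { unfold Rdiv. apply Rmult_le_compat_l; [lra|]. apply Rinv_le_contravar; lra. }
  assert (H4 : (1 - l) / l = (1 - l) + (1 - l) ^ 2 / l) by (field; lra).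
  assert (H5 : (1 - l) ^ 2 / l <= (1 - l) ^ 2 / beta).
  { unfold Rdiv. apply Rmult_le_compat_l; [apply pow2_ge_0|]. apply Rinv_le_contravar; lra. }
  assert (Hln : ln l < 0).
  { rewrite <- ln_1. apply ln_increasing; lra. }
  repeat split.
  - lra.
  - replace (1 / beta * (2 * (1 - l))) with (2 * ((1 - l) / beta)) by (field; lra). lra.
  - replace (1 / (2 * beta) * (2 * (1 - l)) ^ 2) with (2 * ((1 - l) ^ 2 / beta)) by (field; lra). lra.
  - lra.
  - lra.
Qed.

Lemma nfloor_spec x : 0 <= x -> x - 1 < INR (nfloor x) <= x.
Proof. intros Hx. unfold nfloor. destruct (base_Int_part x) as [H1 H2].
  assert (Hz : (0 <= Int_part x)%Z).
  { assert (H3 : (-1 < Int_part x)%Z) by (apply lt_IZR; lra). lia. }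
  rewrite INR_IZR_INZ, Z2Nat.id by auto. lra. Qed.

Lemma nceil_spec x : 0 <= x -> x <= INR (nceil x) < x + 1.
Proof. intros Hx. unfold nceil. destruct (base_Int_part (- x)) as [H1 H2].
  assert (Hz : (0 <= - Int_part (- x))%Z).
  { assert (H3 : (Int_part (- x) < 1)%Z) by (apply lt_IZR; lra). lia. }
  rewrite INR_IZR_INZ, Z2Nat.id by auto. rewrite opp_IZR. lra. Qed.

Lemma sq_le_iff a b : 0 <= a -> 0 < b -> (a <= b <-> a ^ 2 <= b ^ 2).
Proof. intros Ha Hb. split; intros H.
  - apply pow_incr; auto.
  - apply Rnot_lt_le. intros Hl. assert (b ^ 2 < a ^ 2) by (simpl; nra). lra. Qed.

Lemma cv0_sq (a : nat -> R) : (forall n, 0 <= a n) -> (Un_cv a 0 <-> Un_cv (fun n => a n ^ 2) 0).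
Proof. intros Ha. split; intros H eps He.
  - destruct (H (Rmin 1 eps)) as [n0 Hn0]; [apply Rmin_pos; lra|]. exists n0. intros n Hn.
    specialize (Hn0 n Hn). unfold R_dist in *. rewrite Rminus_0_r in *. 
    rewrite Rabs_right in * by (try apply Rle_ge; try apply pow2_ge_0; auto).
    assert (Rmin 1 eps <= 1) by apply Rmin_l. assert (Rmin 1 eps <= eps) by apply Rmin_r.
    specialize (Ha n). simpl. nra.
  - destruct (H (eps ^ 2)) as [n0 Hn0]; [apply pow_lt; lra|]. exists n0. intros n Hn.
    specialize (Hn0 n Hn). unfold R_dist in *. rewrite Rminus_0_r in *.
    rewrite Rabs_right in * by (try apply Rle_ge; try apply pow2_ge_0; auto).
    specialize (Ha n). apply Rnot_le_lt. intros Hl. assert (eps ^ 2 <= a n ^ 2) by (apply pow_incr; lra). lra. Qed.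

Lemma cvinf_sq (a : nat -> R) : (forall n, 0 <= a n) -> (cv_infty a <-> cv_infty (fun n => a n ^ 2)).
Proof. intros Ha. split; intros H M.
  - destruct (H (Rmax M 1)) as [n0 Hn0]. exists n0. intros n Hn. specialize (Hn0 n Hn).
    assert (M <= Rmax M 1) by apply Rmax_l. assert (1 <= Rmax M 1) by apply Rmax_r. simpl. nra.
  - destruct (H (M ^ 2)) as [n0 Hn0]. exists n0. intros n Hn. specialize (Hn0 n Hn). specialize (Ha n).
    apply Rnot_le_lt. intros Hl. destruct (Rle_dec 0 M).
    + assert (a n ^ 2 <= M ^ 2) by (apply pow_incr; lra). lra.
    + lra. Qed.

Lemma Un_cv_le0 (a b : nat -> R) : (exists n0, forall n, (n0 <= n)%nat -> 0 <= a n <= b n) -> Un_cv b 0 -> Un_cv a 0.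
Proof. intros [n0 Hn0] Hb eps He. destruct (Hb eps He) as [n1 Hn1]. exists (Nat.max n0 n1). intros n Hn.
  specialize (Hn0 n ltac:(lia)). specialize (Hn1 n ltac:(lia)). unfold R_dist in *. rewrite Rminus_0_r in *.
  rewrite Rabs_right in * by lra. lra. Qed.

Lemma cvinf_le (a b : nat -> R) : (exists n0, forall n, (n0 <= n)%nat -> b n <= a n) -> cv_infty b -> cv_infty a.
Proof. intros [n0 Hn0] Hb M. destruct (Hb M) as [n1 Hn1]. exists (Nat.max n0 n1). intros n Hn.
  specialize (Hn0 n ltac:(lia)). specialize (Hn1 n ltac:(lia)). lra. Qed.

Lemma cvinf_ext (a b : nat -> R) : (forall n, a n = b n) -> cv_infty a -> cv_infty b.
Proof. intros H Ha M. destruct (Ha M) as [n0 Hn]. exists n0. intros n Hn'. rewrite <- H. auto. Qed.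

Lemma d2_nonneg N K pi mu m : 0 <= Defs.d2 N K pi mu m.
Proof. unfold Defs.d2, L2dist. apply sqrt_pos. Qed.
Lemma d2c_nonneg N K pi mu t : 0 <= d2c N K pi mu t.
Proof. unfold d2c, L2dist. apply sqrt_pos. Qed.

Section Conv.
Variable N : nat -> nat.
Variable K : nat -> nat -> nat -> R.
Variables pi mu : nat -> nat -> R.
Variables W q r : nat -> nat -> R.
Hypothesis HW : forall n i, (i < N n)%nat -> 0 <= W n i.
Hypothesis Hq : forall n i, (i < N n)%nat -> 0 < q n i.
Hypothesis Hr : forall n i, (i < N n)%nat -> 0 < r n i.
Hypothesis Hd2 : forall n m, (Defs.d2 (N n) (K n) (pi n) (mu n) m) ^ 2 = Es (N n) (W n) (q n) (INR m).
Hypothesis Hd2c : forall n t, (d2c (N n) (K n) (pi n) (mu n) t) ^ 2 = Es (N n) (W n) (r n) t.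

Lemma conv_cont : L2_cutoff_c N K pi mu <-> cutoffE N W r.
Proof. split; intros [tn [Htn H]]; exists tn; split; auto; intros a Ha; destruct (H a Ha) as [H1 H2]; split.
  - apply (Un_cv_ext (fun n => (d2c (N n) (K n) (pi n) (mu n) ((1 + a) * tn n)) ^ 2)); [intros; apply Hd2c|].
    apply (cv0_sq (fun n => d2c (N n) (K n) (pi n) (mu n) ((1 + a) * tn n))); auto. intros; apply d2c_nonneg.
  - apply (cvinf_ext (fun n => (d2c (N n) (K n) (pi n) (mu n) ((1 - a) * tn n)) ^ 2)); [intros; apply Hd2c|].
    apply (cvinf_sq (fun n => d2c (N n) (K n) (pi n) (mu n) ((1 - a) * tn n))); auto. intros; apply d2c_nonneg.
  - apply (cv0_sq (fun n => d2c (N n) (K n) (pi n) (mu n) ((1 + a) * tn n))); [intros; apply d2c_nonneg|].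
    apply (Un_cv_ext (fun n => Es (N n) (W n) (r n) ((1 + a) * tn n))); [intros; symmetry; apply Hd2c|]. auto.
  - apply (cvinf_sq (fun n => d2c (N n) (K n) (pi n) (mu n) ((1 - a) * tn n))); [intros; apply d2c_nonneg|].
    apply (cvinf_ext (fun n => Es (N n) (W n) (r n) ((1 - a) * tn n))); [intros; symmetry; apply Hd2c|]. auto.
Qed.

Hypothesis HTG : exists es, 0 < es /\ forall M, exists n0, forall n, (n0 <= n)%nat ->
   forall t, Es (N n) (W n) (q n) t <= es -> M < t.

Lemma conv_disc : L2_cutoff N K pi mu <-> cutoffE N W q.
Proof. split; intros [tn [Htn H]]; exists tn; split; auto.
  - assert (Hinf : forall M, exists n0, forall n, (n0 <= n)%nat -> M < tn n).
    { intros M. destruct HTG as [es [Hes HT]].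
      destruct (H (1/2) ltac:(lra)) as [H1 _].
      apply (cv0_sq (fun n => Defs.d2 (N n) (K n) (pi n) (mu n) (nceil ((1 + 1/2) * tn n)))) in H1;
        [|intros; apply d2_nonneg].
      destruct (H1 es Hes) as [n1 Hn1]. destruct (HT (3/2 * M + 1)) as [n2 Hn2].
      exists (Nat.max n1 n2). intros n Hn. specialize (Hn1 n ltac:(lia)). unfold R_dist in Hn1.
      rewrite Rminus_0_r, Rabs_right in Hn1 by (apply Rle_ge, pow2_ge_0).
      rewrite Hd2 in Hn1.
      assert (Hc := nceil_spec ((1 + 1/2) * tn n) ltac:(specialize (Htn n); nra)).
      assert (3/2 * M + 1 < INR (nceil ((1 + 1 / 2) * tn n))) by (apply (Hn2 n ltac:(lia)); lra).
      lra. }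
    intros a Ha. destruct (H (a/2) ltac:(lra)) as [H1 H2].
    destruct (Hinf (2 / a)) as [n0 Hn0].
    assert (Hbig : forall n, (n0 <= n)%nat -> a / 2 * tn n > 1).
    { intros n Hn. specialize (Hn0 n Hn). apply (Rmult_lt_compat_l (a/2)) in Hn0; [|lra].
      replace (a / 2 * (2 / a)) with 1 in Hn0 by (field; lra); lra. }
    split.
    + apply (cv0_sq (fun n => Defs.d2 (N n) (K n) (pi n) (mu n) (nceil ((1 + a/2) * tn n)))) in H1;
        [|intros; apply d2_nonneg].
      eapply Un_cv_le0; [|exact H1].
      exists n0; intros n Hn; cbv beta. split; [apply Es_nonneg; auto|].
      rewrite Hd2; apply Es_mono; auto.
      assert (Hc := nceil_spec ((1 + a/2) * tn n) ltac:(specialize (Htn n); nra)).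
      specialize (Hbig n Hn). lra.
    + apply (cvinf_sq (fun n => Defs.d2 (N n) (K n) (pi n) (mu n) (nfloor ((1 - a/2) * tn n)))) in H2;
        [|intros; apply d2_nonneg].
      eapply cvinf_le; [|exact H2].
      exists n0; intros n Hn; cbv beta.
      rewrite Hd2; apply Es_mono; auto.
      assert (Hc := nfloor_spec ((1 - a/2) * tn n) ltac:(specialize (Htn n); nra)).
      specialize (Hbig n Hn). lra.
  - intros a Ha. destruct (H a Ha) as [H1 H2]. split.
    + apply (cv0_sq (fun n => Defs.d2 (N n) (K n) (pi n) (mu n) (nceil ((1 + a) * tn n)))); [intros; apply d2_nonneg|].
      eapply Un_cv_le0; [|exact H1].
      exists 0%nat; intros n Hn; cbv beta. split; [apply pow2_ge_0|].
      rewrite Hd2; apply Es_mono; auto.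
      apply nceil_spec; specialize (Htn n); nra.
    + apply (cvinf_sq (fun n => Defs.d2 (N n) (K n) (pi n) (mu n) (nfloor ((1 - a) * tn n)))); [intros; apply d2_nonneg|].
      eapply cvinf_le; [|exact H2].
      exists 0%nat; intros n Hn; cbv beta.
      rewrite Hd2; apply Es_mono; auto.
      apply nfloor_spec; specialize (Htn n); nra.
Qed.
End Conv.

Section HTsec.
Variable N : nat -> nat.
Variable K : nat -> nat -> nat -> R.
Variables pi mu : nat -> nat -> R.
Variables W q r : nat -> nat -> R.
Hypothesis HW : forall n i, (i < N n)%nat -> 0 <= W n i.
Hypothesis Hq : forall n i, (i < N n)%nat -> 0 < q n i.
Hypothesis Hr : forall n i, (i < N n)%nat -> 0 < r n i.
Hypothesis Hd2 : forall n m, (Defs.d2 (N n) (K n) (pi n) (mu n) m) ^ 2 = Es (N n) (W n) (q n) (INR m).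
Hypothesis Hd2c : forall n t, (d2c (N n) (K n) (pi n) (mu n) t) ^ 2 = Es (N n) (W n) (r n) t.
Hypothesis Hsum : cv_infty (fun n => sumN (N n) (W n)).
Variable kappa : R.
Hypothesis Hkappa : 1 <= kappa.
Hypothesis Hrq : forall n i, (i < N n)%nat -> r n i <= 1 * q n i.
Hypothesis Hqr : forall n i, (i < N n)%nat -> q n i <= kappa * r n i.

Lemma GleF n t : 0 <= t -> Es (N n) (W n) (q n) t <= Es (N n) (W n) (r n) t.
Proof. intros Ht. assert (H := cmp_upper (N n) (W n) (q n) (r n) 1 t (HW n) (Hrq n) ltac:(lra) Ht).
  replace (t / 1) with t in H by field. auto. Qed.

Lemma FleG n t : 0 <= t -> Es (N n) (W n) (r n) (kappa * t) <= Es (N n) (W n) (q n) t.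
Proof. intros Ht. assert (H := cmp_upper (N n) (W n) (r n) (q n) kappa (kappa * t) (HW n) (Hqr n) ltac:(lra) ltac:(nra)).
  replace (kappa * t / kappa) with t in H by (field; lra). auto. Qed.

Lemma pos_time (w rr : nat -> nat -> R) es : (forall n i, (i < N n)%nat -> 0 <= w n i) ->
  (forall n i, (i < N n)%nat -> 0 < rr n i) -> cv_infty (fun n => sumN (N n) (w n)) ->
  exists n0, forall n, (n0 <= n)%nat -> forall t, Es (N n) (w n) (rr n) t <= es -> 0 < t.
Proof. intros Hw Hrr Hs. destruct (Hs es) as [n0 Hn0]. exists n0. intros n Hn t Ht.
  apply Rnot_le_lt. intros Hle. assert (H := Es_mono (N n) (w n) (rr n) (Hw n) (Hrr n) t 0 Hle).
  rewrite Es_0 in H. specialize (Hn0 n Hn). lra. Qed.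

Lemma HT_both eps0 : 0 < eps0 ->
  (cv_infty (fun n => INR (T2 (N n) (K n) (pi n) (mu n) eps0)) \/
   cv_infty (fun n => T2c (N n) (K n) (pi n) (mu n) eps0)) ->
  (forall M, exists n0, forall n, (n0 <= n)%nat -> forall t, Es (N n) (W n) (q n) t <= eps0 ^ 2 -> M < t) /\
  (forall M, exists n0, forall n, (n0 <= n)%nat -> forall t, Es (N n) (W n) (r n) t <= eps0 ^ 2 -> M < t).
Proof. intros He [HT|HT].
  - assert (HG : forall M, exists n0, forall n, (n0 <= n)%nat -> forall t, Es (N n) (W n) (q n) t <= eps0 ^ 2 -> M < t).
    { intros M. destruct (HT (M + 1)) as [n0 Hn0].
      destruct (pos_time W q (eps0 ^ 2) HW Hq Hsum) as [n1 Hn1].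
      exists (Nat.max n0 n1). intros n Hn t Ht.
      assert (Htp := Hn1 n ltac:(lia) t Ht).
      assert (Hc := nceil_spec t ltac:(lra)).
      set (m := nceil t) in *.
      assert (Hdm : Defs.d2 (N n) (K n) (pi n) (mu n) m <= eps0).
      { apply (sq_le_iff _ _ (d2_nonneg _ _ _ _ _) He). rewrite Hd2.
        eapply Rle_trans; [|exact Ht]. apply Es_mono; auto. lra. }
      assert (HTm : (T2 (N n) (K n) (pi n) (mu n) eps0 <= m)%nat).
      { unfold T2.
        destruct (Wf_nat.dec_inh_nat_subset_has_unique_least_element
           (fun k => Defs.d2 (N n) (K n) (pi n) (mu n) k <= eps0)) as [m0 [[Hm0 Hm0l] _]].
        - intros k. apply classic.
        - exists m. auto.
        - assert (Hs := epsilon_spec (inhabits 0%nat) (fun m => Defs.d2 (N n) (K n) (pi n) (mu n) m <= eps0 /\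
             forall k, Defs.d2 (N n) (K n) (pi n) (mu n) k <= eps0 -> (m <= k)%nat)
             (ex_intro _ m0 (conj Hm0 Hm0l))).
          destruct Hs as [_ Hs]. apply Hs. auto. }
      apply le_INR in HTm. specialize (Hn0 n ltac:(lia)). lra. }
    split; auto.
    intros M. destruct (HG M) as [n0 Hn0]. destruct (pos_time W r (eps0 ^ 2) HW Hr Hsum) as [n1 Hn1].
    exists (Nat.max n0 n1). intros n Hn t Ht. apply (Hn0 n ltac:(lia)).
    eapply Rle_trans; [|exact Ht]. apply GleF. left. apply (Hn1 n ltac:(lia) t Ht).
  - assert (HF : forall M, exists n0, forall n, (n0 <= n)%nat -> forall t, Es (N n) (W n) (r n) t <= eps0 ^ 2 -> M < t).
    { intros M. destruct (HT M) as [n0 Hn0].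
      destruct (pos_time W r (eps0 ^ 2) HW Hr Hsum) as [n1 Hn1].
      destruct (Hsum (eps0 ^ 2)) as [n2 Hn2].
      exists (Nat.max n0 (Nat.max n1 n2)). intros n Hn t Ht.
      assert (Htp := Hn1 n ltac:(lia) t Ht).
      assert (Hs2 : eps0 ^ 2 < sumN (N n) (W n)) by (apply Hn2; lia).
      destruct (time_exists (N n) (W n) (r n) (HW n) (Hr n) (eps0 ^ 2) ltac:(split; [apply pow_lt; auto|auto]))
        as [t0 [Ht0 Ht0e]].
      assert (Hd : forall s, Es (N n) (W n) (r n) s <= eps0 ^ 2 <-> d2c (N n) (K n) (pi n) (mu n) s <= eps0).
      { intros s. rewrite <- Hd2c. symmetry. apply sq_le_iff; auto. apply d2c_nonneg. }
      assert (HTc : T2c (N n) (K n) (pi n) (mu n) eps0 <= t).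
      { unfold T2c.
        assert (Hs := epsilon_spec (inhabits 0) (fun t' => 0 <= t' /\ d2c (N n) (K n) (pi n) (mu n) t' <= eps0 /\
           forall s, 0 <= s -> d2c (N n) (K n) (pi n) (mu n) s <= eps0 -> t' <= s)).
        destruct Hs as [_ [_ Hs]].
        - exists t0. split; [lra|]. split; [apply Hd; lra|].
          intros s Hs0 Hs. apply Hd in Hs. apply Rnot_lt_le. intros Hlt.
          assert (Hst := Es_strict (N n) (W n) (r n) (HW n) (Hr n) s t0 ltac:(apply Rlt_trans with (eps0 ^ 2); auto; apply pow_lt; auto) Hlt).
          lra.
        - apply Hs; [lra|]. apply Hd. auto. }
      specialize (Hn0 n ltac:(lia)). lra. }
    split; auto.
    intros M. destruct (HF (kappa * M)) as [n0 Hn0]. destruct (pos_time W q (eps0 ^ 2) HW Hq Hsum) as [n1 Hn1].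
    exists (Nat.max n0 n1). intros n Hn t Ht.
    assert (Htp := Hn1 n ltac:(lia) t Ht).
    assert (H := Hn0 n ltac:(lia) (kappa * t) ltac:(eapply Rle_trans; [apply FleG; lra|exact Ht])).
    apply (Rmult_lt_reg_l kappa); lra.
Qed.
End HTsec.

From Stdlib Require Import Reals ZArith ClassicalEpsilon Lra Lia Classical.
Open Scope R_scope.

Theorem corollary3p6 (N : nat -> nat) (K : nat -> nat -> nat -> R)
  (pi mu : nat -> nat -> R)
  (HN : forall n, (1 <= N n)%nat)
  (HK : forall n, is_markov_kernel (N n) (K n))
  (Hirr : forall n, irreducible (N n) (K n))
  (Hpi : forall n, is_prob (N n) (pi n) /\ (forall x, (x < N n)%nat -> 0 < pi n x))
  (Hrev : forall n, reversible (N n) (K n) (pi n))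
  (Hmu : forall n, is_prob (N n) (mu n))
  (Hhol : exists c, 1 / 2 < c /\ forall n x, (x < N n)%nat -> c <= K n x x)
  (Hnorm : cv_infty (fun n => sumN (N n) (fun y => mu n y ^ 2 / pi n y)))
  (Heps : exists eps0, 0 < eps0 /\
     (cv_infty (fun n => INR (T2 (N n) (K n) (pi n) (mu n) eps0)) \/
      cv_infty (fun n => T2c (N n) (K n) (pi n) (mu n) eps0))) :
  L2_cutoff N K pi mu <-> L2_cutoff_c N K pi mu.
Proof.
  destruct Hhol as [c [Hc Hcx]].
  set (beta := 2 * c - 1). assert (Hb : 0 < beta) by (unfold beta; lra).
  set (b0 := Rmin (beta / 2) (1 / 2)).
  assert (Hb0 : 0 < b0) by (unfold b0; apply Rmin_pos; lra).
  assert (Hb0b : b0 <= beta) by (unfold b0; assert (Rmin (beta/2) (1/2) <= beta/2) by apply Rmin_l; lra).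
  assert (Hb01 : b0 <= 1/2) by (unfold b0; apply Rmin_r).
  set (P := fun n (wl : (nat -> R) * (nat -> R)) =>
    (forall i, (i < N n)%nat -> 0 <= fst wl i /\ (0 < fst wl i -> 2 * c - 1 <= snd wl i < 1)) /\
    (forall m, (Defs.d2 (N n) (K n) (pi n) (mu n) m) ^ 2 = sumN (N n) (fun i => fst wl i * (snd wl i ^ m) ^ 2)) /\
    (forall t, (d2c (N n) (K n) (pi n) (mu n) t) ^ 2 = sumN (N n) (fun i => fst wl i * exp (-2 * t * (1 - snd wl i)))) /\
    sumN (N n) (fst wl) = sumN (N n) (fun y => mu n y ^ 2 / pi n y) - 1).
  assert (Hex : forall n, exists wl, P n wl).
  { intros n. destruct (chain_rep (N n) (K n) (pi n) (mu n) c (HN n) (HK n) (Hirr n) (proj1 (Hpi n))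
      (proj2 (Hpi n)) (Hrev n) (Hmu n) (Hcx n)) as [w [l H]]. exists (w, l). exact H. }
  set (WL := fun n => epsilon (inhabits ((fun _ : nat => 0), (fun _ : nat => 0))) (P n)).
  assert (HWL : forall n, P n (WL n)) by (intros n; apply epsilon_spec; auto).
  set (W := fun n => fst (WL n)). set (L := fun n => snd (WL n)).
  set (lamt := fun n i => if Rlt_dec 0 (W n i) then L n i else b0).
  set (q := fun n i => -2 * ln (lamt n i)). set (r := fun n i => 2 * (1 - lamt n i)).
  assert (HW0 : forall n i, (i < N n)%nat -> 0 <= W n i).
  { intros n i Hi. destruct (HWL n) as [H _]. apply (H i Hi). }
  assert (HWcase : forall n i, (i < N n)%nat -> (0 < W n i /\ lamt n i = L n i) \/ W n i = 0).
  { intros n i Hi. unfold lamt. destruct (Rlt_dec 0 (W n i)); [left; auto|right].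
    specialize (HW0 n i Hi). lra. }
  assert (Hlt : forall n i, (i < N n)%nat -> b0 <= lamt n i < 1).
  { intros n i Hi. unfold lamt. destruct (Rlt_dec 0 (W n i)) as [Hp|Hp]; [|lra].
    destruct (HWL n) as [H _]. destruct (H i Hi) as [_ H2]. specialize (H2 Hp). fold beta in H2.
    unfold L. lra. }
  assert (Hrc : forall n i, (i < N n)%nat ->
     r n i <= q n i /\ q n i <= (1 / b0) * r n i /\ q n i <= r n i + (1 / (2 * b0)) * r n i ^ 2 /\
     0 < r n i /\ 0 < q n i).
  { intros n i Hi. unfold q, r. apply rates_cmp; auto. }
  assert (Hd2 : forall n m, (Defs.d2 (N n) (K n) (pi n) (mu n) m) ^ 2 = Es (N n) (W n) (q n) (INR m)).
  { intros n m. destruct (HWL n) as [_ [H _]]. rewrite H. unfold Es. apply sumN_ext. intros i Hi.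
    destruct (HWcase n i Hi) as [[Hp E]|E].
    - unfold q. rewrite E. fold (L n). fold (W n).
      assert (HL : 0 < L n i) by (specialize (Hlt n i Hi); rewrite E in Hlt; lra).
      replace (- INR m * (-2 * ln (L n i))) with (INR (2 * m) * ln (L n i)) by (rewrite mult_INR; simpl; ring).
      fold (Rpower (L n i) (INR (2 * m))). rewrite Rpower_pow by auto.
      change (snd (WL n) i) with (L n i). rewrite <- pow_mult.
      replace (m * 2)%nat with (2 * m)%nat by lia. reflexivity.
    - fold (W n). rewrite E. ring. }
  assert (Hd2c : forall n t, (d2c (N n) (K n) (pi n) (mu n) t) ^ 2 = Es (N n) (W n) (r n) t).
  { intros n t. destruct (HWL n) as [_ [_ [H _]]]. rewrite H. unfold Es. apply sumN_ext. intros i Hi.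
    destruct (HWcase n i Hi) as [[Hp E]|E].
    - unfold r. rewrite E. fold (L n). fold (W n). f_equal. f_equal. ring.
    - fold (W n). rewrite E. ring. }
  assert (Hsum : cv_infty (fun n => sumN (N n) (W n))).
  { intros M. destruct (Hnorm (M + 1)) as [n0 Hn0]. exists n0. intros n Hn.
    destruct (HWL n) as [_ [_ [_ H]]]. fold (W n) in H. rewrite H. specialize (Hn0 n Hn). lra. }
  assert (Hr : forall n i, (i < N n)%nat -> 0 < r n i) by (intros; apply Hrc; auto).
  assert (Hq : forall n i, (i < N n)%nat -> 0 < q n i) by (intros; apply Hrc; auto).
  assert (Hkap : 1 <= 1 / b0).
  { apply (Rmult_le_reg_l b0); auto. replace (b0 * (1 / b0)) with 1 by (field; lra). lra. }
  assert (HC0 : 0 <= 1 / (2 * b0)) by (left; apply Rdiv_lt_0_compat; lra).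
  destruct Heps as [eps0 [He0 Heps]].
  destruct (HT_both N K pi mu W q r HW0 Hq Hr Hd2 Hd2c Hsum (1 / b0) Hkap
     ltac:(intros; rewrite Rmult_1_l; apply Hrc; auto) ltac:(intros; apply Hrc; auto) eps0 He0 Heps) as [HTG HTF].
  assert (HTG' : exists es, 0 < es /\ forall M, exists n0, forall n, (n0 <= n)%nat ->
     forall t, Es (N n) (W n) (q n) t <= es -> M < t) by (exists (eps0 ^ 2); split; [apply pow_lt; auto|auto]).
  assert (HTF' : exists es, 0 < es /\ forall M, exists n0, forall n, (n0 <= n)%nat ->
     forall t, Es (N n) (W n) (r n) t <= es -> M < t) by (exists (eps0 ^ 2); split; [apply pow_lt; auto|auto]).
  rewrite (conv_disc N K pi mu W q HW0 Hq Hd2 HTG'), (conv_cont N K pi mu W r Hd2c).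
  split; intros H.
  - apply (transfer N W q r HW0 Hq Hr Hsum 1 (1 / (2 * b0))); [lra|exact HC0| | |exact HTF'|exact H].
    + intros n i Hi. rewrite Rmult_1_l. apply Hrc; auto.
    + intros n i Hi. apply Hrc; auto.
  - apply (transfer N W r q HW0 Hr Hq Hsum (1 / b0) 0); [exact Hkap|lra| | |exact HTG'|exact H].
    + intros n i Hi. apply Hrc; auto.
    + intros n i Hi. rewrite Rmult_0_l, Rplus_0_r. apply Hrc; auto.
Qed.
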